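(* Let $\mathcal{A},\mathcal{B}\in\mathbb{S}^{[m,n]}$ with $\mathcal{B}$ positive definite, let $\lambda(x)=\mathcal{A}x^m/\mathcal{B}x^m$, $g(x)=\nabla\lambda(x)$, $\Omega=\mathbb{S}^{n-1}_+=\{x\in\mathbb{R}^n:x^Tx=1,x\ge0\}$, and let $P_\Omega$ be a Euclidean projection onto $\Omega$. Fix constants $\rho\in(0,1)$ and $0<\beta_{\min}\le\beta_{\max}$. Let $\{x_k\}$ be generated by the following algorithm (SPG1): choose $x_0\in\Omega$, $\beta_0=1/\|g(x_0)\|$; at iteration $k$, with $g_k=g(x_k)$: (1) compute $z_k=P_\Omega(x_k+\beta_k g_k)$ and $d_k=z_k-x_k$; (2) if $d_k=0$ stop; otherwise set $\alpha=1$; (3) while $\lambda(x_k+\alpha d_k)<\lambda(x_k)+\rho\alpha g_k^Td_k$, replace $\alpha$ by $\alpha/2$; then set $\alpha_k=\alpha$, $x_{k+1}=x_k+\alpha_kd_k$, $s_k=x_{k+1}-x_k$, $y_k=g_{k+1}-g_k$; (4) if $b_k=\langle s_k,y_k\rangle\le0$ set $\beta_{k+1}=\beta_{\max}$, else $\beta_{k+1}=\max\{\beta_{\min},\min\{\beta_{\max},\langle s_k,s_k\rangle/b_k\}\}$. Then: if the algorithm stops at some $x_k$ (i.e. $d_k=0$), $(\lambda(x_k),x_k)$ is a solution of the TEiCP for $(\mathcal{A},\mathcal{B})$; otherwise every accumulation point $x^*$ of $\{x_k\}$ is a constrained stationary point of the problem $\max\{\lambda(x):x\in\Omega\}$ (so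 that $(\lambda(x^* ),x^* )$ solves the TEiCP), and the sequence $\{\lambda(x_k)\}$ converges to a Pareto eigenvalue of $(\mathcal{A},\mathcal{B})$.
   Context: $\mathbb{S}^{[m,n]}$ is the set of real symmetric $m$th-order $n$-dimensional tensors; $(\mathcal{A}x^{m-1})_i=\sum_{i_2,\dots,i_m=1}^n a_{i i_2\cdots i_m}x_{i_2}\cdots x_{i_m}$, $\mathcal{A}x^m=x^T(\mathcal{A}x^{m-1})$; $\mathcal{B}$ positive definite means $\mathcal{B}x^m>0$ for $x\ne0$. The gradient is $g(x)=\frac{m}{\mathcal{B}x^m}\bigl(\mathcal{A}x^{m-1}-\lambda(x)\mathcal{B}x^{m-1}\bigr)$. The TEiCP for $(\mathcal{A},\mathcal{B})$ asks for $\lambda\in\mathbb{R}$ and $x\in\mathbb{R}^n\setminus\{0\}$ with $x\ge0$, $(\lambda\mathcal{B}-\mathcal{A})x^{m-1}\ge0$, $\langle x,(\lambda\mathcal{B}-\mathcal{A})x^{m-1}\rangle=0$; such $\lambda$ is a Pareto eigenvalue and $x$ a Pareto eigenvector. A constrained stationary point of $\max\{\lambda(x):x\in\Omega\}$ is a point $x\in\Omega$ satisfying the KKT conditions: there exist $\mu\in\mathbb{R}$, $v\in\mathbb{R}^n$ with $\nabla\lambda(x)+2\mu x+v=0$, $v\ge0$, $v^Tx=0$. *)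

(* Defs.v *)
From Stdlib Require Import Reals Lra Lia List Permutation.
Open Scope R_scope.

(* Vectors of R^n are represented as functions nat -> R; only the
   components with index < n are meaningful. *)
Definition vec := nat -> R.

(* An m-th order n-dimensional tensor: entries a_{i1...im} indexed by the
   list [i1;...;im]; only lists of length m with entries < n matter. *)
Definition tensor := list nat -> R.

Fixpoint sumR (n : nat) (f : nat -> R) : R :=
  match n with
  | O => 0
  | S k => sumR k f + f k
  end.

Fixpoint sum_idx (n k : nat) (F : list nat -> R) : R :=
  match k with
  | O => F nil
  | S k' => sumR n (fun j => sum_idx n k' (fun l => F (j :: l)))
  end.

Definition prodx (x : vec) (l : list nat) : R :=
  fold_right (fun j acc => x j * acc) 1 l.

Definition inner (n : nat) (u v : vec) : R := sumR n (fun i => u i * v i).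
Definition vnorm (n : nat) (u : vec) : R := sqrt (inner n u u).

Definition Txm (m n : nat) (A : tensor) (x : vec) : R :=
  sum_idx n m (fun l => A l * prodx x l).

Definition Txm1 (m n : nat) (A : tensor) (x : vec) : vec :=
  fun i => sum_idx n (m - 1) (fun l => A (i :: l) * prodx x l).

Definition symmetric_tensor (m n : nat) (A : tensor) : Prop :=
  forall l l', length l = m -> Forall (fun j => (j < n)%nat) l ->
    Permutation l l' -> A l = A l'.

Definition nonzero (n : nat) (x : vec) : Prop := exists i, (i < n)%nat /\ x i <> 0.
Definition vzero (n : nat) (x : vec) : Prop := forall i, (i < n)%nat -> x i = 0.

Definition pos_def (m n : nat) (B : tensor) : Prop :=
  forall x, nonzero n x -> Txm m n B x > 0.

Definition lam (m n : nat) (A B : tensor) (x : vec) : R := Txm m n A x / Txm m n B x.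

Definition grad (m n : nat) (A B : tensor) (x : vec) : vec :=
  fun i => (INR m / Txm m n B x) * (Txm1 m n A x i - lam m n A B x * Txm1 m n B x i).

Definition Omega (n : nat) (x : vec) : Prop :=
  inner n x x = 1 /\ forall i, (i < n)%nat -> 0 <= x i.

Definition is_proj (n : nat) (P : vec -> vec) : Prop :=
  forall y, Omega n (P y) /\
    forall z, Omega n z -> vnorm n (fun i => y i - P y i) <= vnorm n (fun i => y i - z i).

Definition TEiCP (m n : nat) (A B : tensor) (l : R) (x : vec) : Prop :=
  nonzero n x /\
  (forall i, (i < n)%nat -> 0 <= x i) /\
  (forall i, (i < n)%nat -> 0 <= l * Txm1 m n B x i - Txm1 m n A x i) /\
  inner n x (fun i => l * Txm1 m n B x i - Txm1 m n A x i) = 0.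

Definition pareto_eigenvalue (m n : nat) (A B : tensor) (l : R) : Prop :=
  exists x, TEiCP m n A B l x.

Definition constrained_stationary (m n : nat) (A B : tensor) (x : vec) : Prop :=
  Omega n x /\
  exists (mu : R) (v : vec),
    (forall i, (i < n)%nat -> grad m n A B x i + 2 * mu * x i + v i = 0) /\
    (forall i, (i < n)%nat -> 0 <= v i) /\
    inner n v x = 0.

Definition accumulation_point (n : nat) (xs : nat -> vec) (xstar : vec) : Prop :=
  exists phi : nat -> nat, (forall j, (phi j < phi (S j))%nat) /\
    forall i, (i < n)%nat -> Un_cv (fun j => xs (phi j) i) (xstar i).

Definition direction (m n : nat) (A B : tensor) (P : vec -> vec) (x : vec) (beta : R) : vec :=
  fun i => P (fun j => x j + beta * grad m n A B x j) i - x i.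

(* Armijo test of step (3): the while loop stops at alpha when this holds *)
Definition armijo_ok (m n : nat) (A B : tensor) (rho : R) (x d : vec) (alpha : R) : Prop :=
  lam m n A B (fun i => x i + alpha * d i) >= lam m n A B x + rho * alpha * inner n (grad m n A B x) d.

(* one iteration (steps (3),(4)) of SPG1 at index k, given d_k <> 0;
   alpha_k = (1/2)^(t k) where t k is the number of halvings *)
Definition SPG1_step (m n : nat) (A B : tensor) (P : vec -> vec) (rho bmin bmax : R)
  (x : nat -> vec) (beta : nat -> R) (t : nat -> nat) (k : nat) : Prop :=
  let d := direction m n A B P (x k) (beta k) in
  (armijo_ok m n A B rho (x k) d ((/2) ^ t k) /\
   forall s, (s < t k)%nat -> ~ armijo_ok m n A B rho (x k) d ((/2) ^ s)) /\
  (forall i, (i < n)%nat -> x (S k) i = x k i + (/2) ^ t k * d i) /\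
  let s := fun i => x (S k) i - x k i in
  let y := fun i => grad m n A B (x (S k)) i - grad m n A B (x k) i in
  let b := inner n s y in
  (b <= 0 -> beta (S k) = bmax) /\
  (b > 0 -> beta (S k) = Rmax bmin (Rmin bmax (inner n s s / b))).

Definition SPG1_generated (m n : nat) (A B : tensor) (P : vec -> vec) (rho bmin bmax : R)
  (x : nat -> vec) (beta : nat -> R) (t : nat -> nat) : Prop :=
  Omega n (x 0%nat) /\
  beta 0%nat = 1 / vnorm n (grad m n A B (x 0%nat)) /\
  forall k, (forall j, (j <= k)%nat -> ~ vzero n (direction m n A B P (x j) (beta j))) ->
    SPG1_step m n A B P rho bmin bmax x beta t k.

(* Main.v *)
Require Import Defs.
From Stdlib Require Import Reals List Permutation.
From Stdlib Require Import Lra Lia Psatz Rtopology ClassicalEpsilon Classical.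
Open Scope R_scope.

Lemma sumR_ext : forall n f g, (forall i, (i < n)%nat -> f i = g i) -> sumR n f = sumR n g.
Proof. induction n; intros f g H; simpl; auto. rewrite (IHn f g) by (intros; apply H; lia). rewrite H by lia; auto. Qed.

Lemma sumR_plus : forall n f g, sumR n (fun i => f i + g i) = sumR n f + sumR n g.
Proof. induction n; intros; simpl; [lra|]. rewrite IHn; lra. Qed.

Lemma sumR_minus : forall n f g, sumR n (fun i => f i - g i) = sumR n f - sumR n g.
Proof. induction n; intros; simpl; [lra|]. rewrite IHn; lra. Qed.

Lemma sumR_scal : forall n c f, sumR n (fun i => c * f i) = c * sumR n f.
Proof. induction n; intros; simpl; [lra|]. rewrite IHn; lra. Qed.

Lemma sumR_scalr : forall n c f, sumR n (fun i => f i * c) = sumR n f * c.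
Proof. induction n; intros; simpl; [lra|]. rewrite IHn; lra. Qed.

Lemma sumR_zero : forall n, sumR n (fun _ => 0) = 0.
Proof. induction n; simpl; [lra|]. rewrite IHn; lra. Qed.

Lemma sumR_le : forall n f g, (forall i, (i < n)%nat -> f i <= g i) -> sumR n f <= sumR n g.
Proof. induction n; intros f g H; simpl; [lra|]. pose proof (IHn f g ltac:(intros; apply H; lia)). pose proof (H n ltac:(lia)). lra. Qed.

Lemma sumR_nonneg : forall n f, (forall i, (i < n)%nat -> 0 <= f i) -> 0 <= sumR n f.
Proof. intros. rewrite <- (sumR_zero n). apply sumR_le; auto. Qed.

Lemma sumR_abs : forall n f, Rabs (sumR n f) <= sumR n (fun i => Rabs (f i)).
Proof. induction n; intros; simpl. rewrite Rabs_R0; lra.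
  pose proof (Rabs_triang (sumR n f) (f n)). pose proof (IHn f). lra. Qed.

Lemma sumR_swap : forall n p (f : nat -> nat -> R),
  sumR n (fun i => sumR p (fun j => f i j)) = sumR p (fun j => sumR n (fun i => f i j)).
Proof. induction n; intros; simpl. rewrite sumR_zero; auto.
  rewrite IHn. rewrite <- sumR_plus. auto. Qed.

Lemma sumR_term_le : forall n f j, (forall i, (i < n)%nat -> 0 <= f i) -> (j < n)%nat -> f j <= sumR n f.
Proof. induction n; intros f j H Hj; simpl; [lia|].
  destruct (Nat.eq_dec j n). subst. pose proof (sumR_nonneg n f ltac:(intros; apply H; lia)). lra.
  pose proof (IHn f j ltac:(intros; apply H; lia) ltac:(lia)). pose proof (H n ltac:(lia)). lra. Qed.

Lemma sumR_single : forall n j a, (j < n)%nat ->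
  sumR n (fun i => if Nat.eq_dec i j then a else 0) = a.
Proof. induction n; intros j a Hj; simpl; [lia|].
  destruct (Nat.eq_dec n j). subst.
  rewrite (sumR_ext _ _ (fun _ => 0)). rewrite sumR_zero; lra.
  intros i Hi. destruct (Nat.eq_dec i j); [lia|auto].
  rewrite IHn by lia. lra. Qed.

Lemma CS_aux : forall N S0 Q a, 0 <= N -> 0 <= S0 -> 0 <= Q -> S0^2 <= N * Q ->
  2 * S0 * a <= Q + N * (a * a).
Proof. intros. destruct (Req_dec N 0). subst. assert (S0 = 0) by nra. subst. nra.
  assert (0 < N) by lra. pose proof (pow2_ge_0 (S0 - N*a)).
  assert (E: (S0 - N*a)^2 = S0^2 - 2*N*(S0*a) + N*(N*(a*a))) by ring.
  assert (2 * N * (S0 * a) <= N * (Q + N * (a*a))) by lra.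
  apply Rmult_le_reg_l with N; nra. Qed.

Lemma sumR_CS : forall n f, (sumR n (fun i => Rabs (f i)))^2 <= INR n * sumR n (fun i => f i * f i).
Proof. induction n; intros; simpl. lra.
  set (S0 := sumR n (fun i => Rabs (f i))). set (Q := sumR n (fun i => f i * f i)).
  pose proof (IHn f) as IH. fold S0 Q in IH.
  assert (0 <= S0) by (apply sumR_nonneg; intros; apply Rabs_pos).
  assert (0 <= Q) by (apply sumR_nonneg; intros; nra).
  pose proof (Rabs_pos (f n)). assert (Rabs (f n) * Rabs (f n) = f n * f n) by (rewrite <- Rabs_mult; apply Rabs_pos_eq; nra).
  pose proof (pos_INR n).
  pose proof (CS_aux (INR n) S0 Q (Rabs (f n)) H3 H H0 IH).
  rewrite <- H2 in *. destruct n; simpl in *; nra. Qed.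

Definition Tk (n k : nat) (T : tensor) (x : vec) : R := sum_idx n k (fun l => T l * prodx x l).
Definition MT (n k : nat) (T : tensor) : R := sum_idx n k (fun l => Rabs (T l)).
Definition Hn (n : nat) (h : vec) : R := sumR n (fun i => Rabs (h i)).
Definition box (n : nat) (x : vec) : Prop := forall i, (i < n)%nat -> Rabs (x i) <= 1.

Fixpoint Lin (n k : nat) (T : tensor) (x h : vec) : R :=
  match k with
  | O => 0
  | S k' => sumR n (fun j => h j * Tk n k' (fun l => T (j :: l)) x + x j * Lin n k' (fun l => T (j :: l)) x h)
  end.

Lemma sum_idx_ext_valid : forall n k F G,
  (forall l, length l = k -> Forall (fun j => (j < n)%nat) l -> F l = G l) ->
  sum_idx n k F = sum_idx n k G.
Proof. intros n k; induction k; intros F G H; simpl. apply H; auto.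
  apply sumR_ext. intros i Hi. apply IHk. intros l Hl Hf. apply H; simpl; auto. Qed.

Lemma sum_idx_scal : forall n k c F, sum_idx n k (fun l => c * F l) = c * sum_idx n k F.
Proof. intros n k; induction k; intros; simpl; auto.
  rewrite <- sumR_scal. apply sumR_ext. intros. apply IHk. Qed.

Lemma Tk_S : forall n k T x, Tk n (S k) T x = sumR n (fun j => x j * Tk n k (fun l => T (j :: l)) x).
Proof. intros. unfold Tk. simpl. apply sumR_ext. intros j Hj. rewrite <- sum_idx_scal.
  apply sum_idx_ext_valid. intros. simpl. ring. Qed.

Lemma MT_S : forall n k T, MT n (S k) T = sumR n (fun j => MT n k (fun l => T (j :: l))).
Proof. reflexivity. Qed.

Lemma MT_nonneg : forall n k T, 0 <= MT n k T.
Proof. intros n k; induction k; intros; [apply Rabs_pos|]. rewrite MT_S. apply sumR_nonneg; auto. Qed.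

Lemma MT_sub : forall n k T j, (j < n)%nat -> MT n k (fun l => T (j :: l)) <= MT n (S k) T.
Proof. intros. rewrite MT_S. apply (sumR_term_le n (fun j => MT n k (fun l => T (j :: l)))); auto.
  intros; apply MT_nonneg. Qed.

Lemma Hn_nonneg : forall n h, 0 <= Hn n h.
Proof. intros; apply sumR_nonneg; intros; apply Rabs_pos. Qed.

Lemma Tk_ext_x : forall n k T x y, (forall i, (i < n)%nat -> x i = y i) -> Tk n k T x = Tk n k T y.
Proof. intros n k; induction k; intros T x y H. reflexivity.
  rewrite !Tk_S. apply sumR_ext. intros. rewrite H by auto. f_equal. apply IHk; auto. Qed.

Lemma Tk_ext_T : forall n k T T' x, (forall l, length l = k -> Forall (fun j => (j < n)%nat) l -> T l = T' l) ->
  Tk n k T x = Tk n k T' x.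
Proof. intros. unfold Tk. apply sum_idx_ext_valid. intros. rewrite H; auto. Qed.

Lemma Tk_scale : forall n k T x c, Tk n k T (fun i => c * x i) = c ^ k * Tk n k T x.
Proof. intros n k; induction k; intros. unfold Tk; simpl; ring.
  rewrite !Tk_S. rewrite <- sumR_scal. apply sumR_ext. intros. rewrite IHk. simpl. ring. Qed.

Lemma Tk_bound : forall n k T x, box n x -> Rabs (Tk n k T x) <= MT n k T.
Proof. intros n k; induction k; intros T x Hx. unfold Tk, MT; simpl. rewrite Rmult_1_r; lra.
  rewrite Tk_S, MT_S. eapply Rle_trans. apply sumR_abs. apply sumR_le. intros j Hj.
  rewrite Rabs_mult. pose proof (Hx j Hj). pose proof (IHk (fun l => T (j :: l)) x Hx).
  pose proof (Rabs_pos (x j)). pose proof (Rabs_pos (Tk n k (fun l => T (j :: l)) x)). nra. Qed.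

Lemma sum_h_MT : forall n k T (h : vec),
  sumR n (fun j => Rabs (h j) * MT n k (fun l => T (j :: l))) <= MT n (S k) T * Hn n h.
Proof. intros. unfold Hn. rewrite Rmult_comm, <- sumR_scalr. apply sumR_le. intros j Hj.
  pose proof (MT_sub n k T j Hj). pose proof (Rabs_pos (h j)). nra. Qed.

Lemma sum_MT_H : forall n k T c,
  sumR n (fun j => c * MT n k (fun l => T (j :: l))) = c * MT n (S k) T.
Proof. intros. rewrite sumR_scal. reflexivity. Qed.

Lemma Lin_bound : forall n k T x h, box n x -> Rabs (Lin n k T x h) <= INR k * MT n k T * Hn n h.
Proof. intros n k; induction k; intros T x h Hx. simpl. rewrite Rabs_R0; lra.
  simpl Lin. eapply Rle_trans. apply sumR_abs.
  eapply Rle_trans with (sumR n (fun j => Rabs (h j) * MT n k (fun l => T (j :: l)) + (INR k * Hn n h) * MT n k (fun l => T (j :: l)))).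
  apply sumR_le. intros j Hj.
  pose proof (Tk_bound n k (fun l => T (j :: l)) x Hx). pose proof (IHk (fun l => T (j :: l)) x h Hx).
  pose proof (Hx j Hj). pose proof (Rabs_pos (h j)). pose proof (Rabs_pos (x j)).
  pose proof (Rabs_pos (Lin n k (fun l => T (j :: l)) x h)).
  pose proof (MT_nonneg n k (fun l => T (j :: l))). pose proof (Hn_nonneg n h). pose proof (pos_INR k).
  rewrite Rabs_triang_aux2 || idtac.
  eapply Rle_trans. apply Rabs_triang. rewrite !Rabs_mult. nra.
  rewrite sumR_plus, sum_MT_H. pose proof (sum_h_MT n k T h). rewrite S_INR. nra. Qed.

Lemma Tk_delta : forall n k T x y, box n x -> box n y ->
  Rabs (Tk n k T y - Tk n k T x) <= INR k * MT n k T * Hn n (fun i => y i - x i).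
Proof. intros n k; induction k; intros T x y Hx Hy. simpl. unfold Tk; simpl. replace (T nil * 1 - T nil * 1) with 0 by ring. rewrite Rabs_R0; lra.
  rewrite !Tk_S. rewrite <- sumR_minus. eapply Rle_trans. apply sumR_abs.
  set (H := Hn n (fun i => y i - x i)).
  eapply Rle_trans with (sumR n (fun j => Rabs (y j - x j) * MT n k (fun l => T (j :: l)) + (INR k * H) * MT n k (fun l => T (j :: l)))).
  apply sumR_le. intros j Hj.
  replace (y j * Tk n k (fun l => T (j :: l)) y - x j * Tk n k (fun l => T (j :: l)) x) with
    ((y j - x j) * Tk n k (fun l => T (j :: l)) y + x j * (Tk n k (fun l => T (j :: l)) y - Tk n k (fun l => T (j :: l)) x)) by ring.
  pose proof (Tk_bound n k (fun l => T (j :: l)) y Hy). pose proof (IHk (fun l => T (j :: l)) x y Hx Hy). fold H in H1.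
  pose proof (Hx j Hj). pose proof (Rabs_pos (y j - x j)). pose proof (Rabs_pos (x j)).
  pose proof (Rabs_pos (Tk n k (fun l => T (j :: l)) y - Tk n k (fun l => T (j :: l)) x)).
  pose proof (MT_nonneg n k (fun l => T (j :: l))). pose proof (Hn_nonneg n (fun i => y i - x i)). fold H in H7. pose proof (pos_INR k).
  eapply Rle_trans. apply Rabs_triang. rewrite !Rabs_mult.
  assert (Rabs (y j - x j) * Rabs (Tk n k (fun l => T (j :: l)) y) <= Rabs (y j - x j) * MT n k (fun l => T (j :: l))) by (apply Rmult_le_compat_l; auto).
  assert (Rabs (x j) * Rabs (Tk n k (fun l => T (j :: l)) y - Tk n k (fun l => T (j :: l)) x) <= 1 * (INR k * MT n k (fun l => T (j :: l)) * H)) by (apply Rmult_le_compat; auto).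
  lra.
  rewrite sumR_plus, sum_MT_H. pose proof (sum_h_MT n k T (fun i => y i - x i)). fold H in H0. rewrite S_INR. nra. Qed.

Lemma Tk_rem : forall n k T x y, box n x -> box n y ->
  Rabs (Tk n k T y - Tk n k T x - Lin n k T x (fun i => y i - x i)) <=
    INR k * INR k * MT n k T * (Hn n (fun i => y i - x i))^2.
Proof. intros n k; induction k; intros T x y Hx Hy. simpl. unfold Tk; simpl. replace (T nil * 1 - T nil * 1 - 0) with 0 by ring. rewrite Rabs_R0; lra.
  rewrite !Tk_S. simpl Lin. rewrite <- !sumR_minus. eapply Rle_trans. apply sumR_abs.
  set (H := Hn n (fun i => y i - x i)).
  eapply Rle_trans with (sumR n (fun j => (INR k * H) * (Rabs (y j - x j) * MT n k (fun l => T (j :: l))) + (INR k * INR k * H^2) * MT n k (fun l => T (j :: l)))).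
  apply sumR_le. intros j Hj.
  set (Tj := (fun l => T (j :: l))).
  replace (y j * Tk n k Tj y - x j * Tk n k Tj x - ((y j - x j) * Tk n k Tj x + x j * Lin n k Tj x (fun i => y i - x i))) with
    ((y j - x j) * (Tk n k Tj y - Tk n k Tj x) + x j * (Tk n k Tj y - Tk n k Tj x - Lin n k Tj x (fun i => y i - x i))) by ring.
  pose proof (Tk_delta n k Tj x y Hx Hy). pose proof (IHk Tj x y Hx Hy). fold H in H0, H1.
  pose proof (Hx j Hj). pose proof (Rabs_pos (y j - x j)). pose proof (Rabs_pos (x j)).
  pose proof (Rabs_pos (Tk n k Tj y - Tk n k Tj x - Lin n k Tj x (fun i => y i - x i))).
  pose proof (Rabs_pos (Tk n k Tj y - Tk n k Tj x)).
  pose proof (MT_nonneg n k Tj). pose proof (Hn_nonneg n (fun i => y i - x i)). fold H in H8. pose proof (pos_INR k).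
  eapply Rle_trans. apply Rabs_triang. rewrite !Rabs_mult.
  assert (Rabs (y j - x j) * Rabs (Tk n k Tj y - Tk n k Tj x) <= Rabs (y j - x j) * (INR k * MT n k Tj * H)) by (apply Rmult_le_compat_l; auto).
  assert (Rabs (x j) * Rabs (Tk n k Tj y - Tk n k Tj x - Lin n k Tj x (fun i => y i - x i)) <= 1 * (INR k * INR k * MT n k Tj * H ^ 2)) by (apply Rmult_le_compat; auto).
  lra.
  rewrite sumR_plus, sumR_scal, sum_MT_H. pose proof (sum_h_MT n k T (fun i => y i - x i)). fold H in H0.
  pose proof (Hn_nonneg n (fun i => y i - x i)). fold H in H1. pose proof (pos_INR k). pose proof (MT_nonneg n (S k) T).
  assert (INR k * H * sumR n (fun j => Rabs (y j - x j) * MT n k (fun l => T (j :: l))) <= INR k * H * (MT n (S k) T * H)).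
  { apply Rmult_le_compat_l; auto. apply Rmult_le_pos; auto. }
  assert (0 <= MT n (S k) T * H^2) by (apply Rmult_le_pos; auto; apply pow2_ge_0).
  rewrite S_INR. nra. Qed.

Lemma sym_sub : forall k n T j, symmetric_tensor (S k) n T -> (j < n)%nat -> symmetric_tensor k n (fun l => T (j :: l)).
Proof. unfold symmetric_tensor. intros. apply H; simpl; auto. Qed.

Lemma sym_swap : forall k n T i j l, symmetric_tensor (S (S k)) n T -> (i < n)%nat -> (j < n)%nat ->
  length l = k -> Forall (fun j => (j < n)%nat) l -> T (j :: i :: l) = T (i :: j :: l).
Proof. unfold symmetric_tensor. intros. apply H; simpl; auto. constructor. Qed.

Lemma Lin_sym : forall n k T x h, symmetric_tensor k n T ->
  Lin n k T x h = INR k * sumR n (fun i => h i * Tk n (k - 1) (fun l => T (i :: l)) x).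
Proof. intros n k; induction k; intros T x h HT. simpl. ring.
  simpl Lin. rewrite sumR_plus.
  rewrite (sumR_ext n (fun j => x j * Lin n k (fun l => T (j :: l)) x h)
     (fun j => x j * (INR k * sumR n (fun i => h i * Tk n (k - 1) (fun l => T (j :: i :: l)) x)))).
  2:{ intros j Hj. rewrite IHk; auto. apply sym_sub; auto. }
  destruct k. rewrite (sumR_ext n (fun j => x j * (INR 0 * sumR n (fun i => h i * Tk n (0 - 1) (fun l => T (j :: i :: l)) x))) (fun _ => 0)) by (intros; simpl; ring). rewrite sumR_zero. simpl INR. replace (1 - 1)%nat with 0%nat by lia. ring.
  replace (S (S k) - 1)%nat with (S k) by lia. replace (S k - 1)%nat with k by lia.
  rewrite (sumR_ext n (fun j => x j * (INR (S k) * sumR n (fun i => h i * Tk n k (fun l => T (j :: i :: l)) x)))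
      (fun j => INR (S k) * sumR n (fun i => h i * (x j * Tk n k (fun l => T (i :: j :: l)) x)))).
  2:{ intros j Hj. rewrite <- !sumR_scal. apply sumR_ext. intros i Hi.
      rewrite (Tk_ext_T n k (fun l => T (j :: i :: l)) (fun l => T (i :: j :: l))). ring.
      intros. apply (sym_swap k n T); auto. }
  rewrite sumR_scal. rewrite sumR_swap.
  rewrite (sumR_ext n (fun j => sumR n (fun i => h j * (x i * Tk n k (fun l => T (j :: i :: l)) x)))
      (fun j => h j * Tk n (S k) (fun l => T (j :: l)) x)).
  2:{ intros j Hj. rewrite Tk_S. rewrite <- sumR_scal. reflexivity. }
  rewrite (S_INR (S k)). ring. Qed.

Lemma Euler_Tk : forall n k T x, Tk n (S k) T x = inner n x (fun i => Tk n k (fun l => T (i :: l)) x).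
Proof. intros. rewrite Tk_S. reflexivity. Qed.

Lemma Txm_Tk : forall m n A x, Txm m n A x = Tk n m A x.
Proof. reflexivity. Qed.
Lemma Txm1_Tk : forall m n A x i, Txm1 m n A x i = Tk n (m - 1) (fun l => A (i :: l)) x.
Proof. reflexivity. Qed.

Lemma inner_comm : forall n u v, inner n u v = inner n v u.
Proof. intros. unfold inner. apply sumR_ext. intros; ring. Qed.

Lemma inner_ext : forall n u v u' v', (forall i, (i < n)%nat -> u i = u' i) -> (forall i, (i < n)%nat -> v i = v' i) ->
  inner n u v = inner n u' v'.
Proof. intros. unfold inner. apply sumR_ext. intros. rewrite H, H0; auto. Qed.

Lemma Euler_Txm : forall m n A x, (1 <= m)%nat -> inner n x (Txm1 m n A x) = Txm m n A x.
Proof. intros. destruct m. lia. rewrite Txm_Tk, Euler_Tk. unfold inner. apply sumR_ext. intros.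
  rewrite Txm1_Tk. replace (S m - 1)%nat with m by lia. reflexivity. Qed.

Lemma grad_Euler : forall m n A B x, (1 <= m)%nat -> Txm m n B x <> 0 -> inner n (grad m n A B x) x = 0.
Proof. intros. unfold inner, grad.
  rewrite (sumR_ext n _ (fun i => (INR m / Txm m n B x) * (x i * Txm1 m n A x i - lam m n A B x * (x i * Txm1 m n B x i)))) by (intros; ring).
  rewrite sumR_scal, sumR_minus, sumR_scal.
  change (sumR n (fun i => x i * Txm1 m n A x i)) with (inner n x (Txm1 m n A x)).
  change (sumR n (fun i => x i * Txm1 m n B x i)) with (inner n x (Txm1 m n B x)).
  rewrite !Euler_Txm by auto. unfold lam. field. auto. Qed.

Lemma grad_inner : forall m n A B x h, inner n (grad m n A B x) h =
  (INR m / Txm m n B x) * (inner n h (Txm1 m n A x) - lam m n A B x * inner n h (Txm1 m n B x)).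
Proof. intros. unfold inner, grad.
  rewrite (sumR_ext n _ (fun i => (INR m / Txm m n B x) * (h i * Txm1 m n A x i - lam m n A B x * (h i * Txm1 m n B x i)))) by (intros; ring).
  rewrite sumR_scal, sumR_minus, sumR_scal. reflexivity. Qed.

Lemma Lin_Txm : forall m n A x h, symmetric_tensor m n A -> Lin n m A x h = INR m * inner n h (Txm1 m n A x).
Proof. intros. rewrite Lin_sym by auto. reflexivity. Qed.


Lemma lam_ext : forall m n A B x y, (forall i, (i < n)%nat -> x i = y i) -> lam m n A B x = lam m n A B y.
Proof. intros. unfold lam, Txm. fold (Tk n m A x) (Tk n m B x) (Tk n m A y) (Tk n m B y).
  rewrite (Tk_ext_x n m A x y), (Tk_ext_x n m B x y); auto. Qed.

Lemma Txm_ext : forall m n A x y, (forall i, (i < n)%nat -> x i = y i) -> Txm m n A x = Txm m n A y.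
Proof. intros. rewrite !Txm_Tk. apply Tk_ext_x; auto. Qed.

Lemma Txm1_ext : forall m n A x y i, (forall i, (i < n)%nat -> x i = y i) -> Txm1 m n A x i = Txm1 m n A y i.
Proof. intros. rewrite !Txm1_Tk. apply Tk_ext_x; auto. Qed.

Lemma grad_ext : forall m n A B x y i, (forall i, (i < n)%nat -> x i = y i) -> grad m n A B x i = grad m n A B y i.
Proof. intros. unfold grad. rewrite (Txm_ext m n B x y), (Txm1_ext m n A x y), (Txm1_ext m n B x y), (lam_ext m n A B x y); auto. Qed.

Lemma Txm_scale : forall m n A x c, Txm m n A (fun i => c * x i) = c ^ m * Txm m n A x.
Proof. intros. rewrite !Txm_Tk. apply Tk_scale. Qed.
Lemma Txm1_scale : forall m n A x c i, Txm1 m n A (fun i => c * x i) i = c ^ (m - 1) * Txm1 m n A x i.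
Proof. intros. rewrite !Txm1_Tk. apply Tk_scale. Qed.

Lemma lam_scale : forall m n A B x c, c <> 0 -> lam m n A B (fun i => c * x i) = lam m n A B x.
Proof. intros. unfold lam. rewrite !Txm_scale. destruct (Req_dec (Txm m n B x) 0).
  rewrite H0. rewrite Rmult_0_r. unfold Rdiv. rewrite Rinv_0. ring.
  field. split; auto. apply pow_nonzero; auto. Qed.

Lemma grad_scale : forall m n A B x c i, (1 <= m)%nat -> c <> 0 -> Txm m n B x <> 0 ->
  grad m n A B (fun i => c * x i) i = grad m n A B x i / c.
Proof. intros. unfold grad. rewrite lam_scale by auto. rewrite !Txm_scale, !Txm1_scale.
  destruct m. lia. replace (S m - 1)%nat with m by lia. simpl pow. field. split; auto. split; auto. apply pow_nonzero; auto. Qed.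

Lemma abs3 : forall a b c A B C, Rabs a <= A -> Rabs b <= B -> Rabs c <= C -> Rabs (a * b * c) <= A * B * C.
Proof. intros. rewrite !Rabs_mult. pose proof (Rabs_pos a). pose proof (Rabs_pos b). pose proof (Rabs_pos c).
  apply Rmult_le_compat; try apply Rmult_le_pos; auto. apply Rmult_le_compat; auto. Qed.

Lemma abs4 : forall a b c d, Rabs (a - b - c + d) <= Rabs a + Rabs b + Rabs c + Rabs d.
Proof. intros. unfold Rminus. eapply Rle_trans. apply Rabs_triang. eapply Rle_trans. apply Rplus_le_compat_r. apply Rabs_triang.
  eapply Rle_trans. apply Rplus_le_compat_r. apply Rplus_le_compat_r. apply Rabs_triang. rewrite !Rabs_Ropp. lra. Qed.

Lemma quot_bound : forall p q p' q' Lp Lq MA MB Hh c M,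
  Rabs p <= MA -> Rabs q <= MB -> 0 < c -> c <= q -> c <= q' ->
  Rabs Lp <= M * MA * Hh -> Rabs (p' - p - Lp) <= M * M * MA * Hh^2 ->
  Rabs (q' - q) <= M * MB * Hh -> Rabs (q' - q - Lq) <= M * M * MB * Hh^2 -> Rabs Lq <= M * MB * Hh ->
  Rabs (p' / q' - p / q - (Lp - p / q * Lq) / q) <= 4 * M^2 * MA * MB^2 / c^3 * Hh^2.
Proof. intros p q p' q' Lp Lq MA MB Hh c M Hp Hq Hc Hcq Hcq' HLp HRp Hdq HRq HLq.
  assert (E : p' / q' - p / q - (Lp - p / q * Lq) / q =
    ((p' - p - Lp) * q * q - p * q * (q' - q - Lq) - Lp * q * (q' - q) + p * Lq * (q' - q)) / (q' * q^2)).
  { field. split; lra. }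
  rewrite E. clear E.
  set (N := (p' - p - Lp) * q * q - p * q * (q' - q - Lq) - Lp * q * (q' - q) + p * Lq * (q' - q)).
  assert (HN : Rabs N <= 4 * M^2 * MA * MB^2 * Hh^2).
  { unfold N. pose proof (abs3 _ _ _ _ _ _ HRp Hq Hq). pose proof (abs3 _ _ _ _ _ _ Hp Hq HRq).
    pose proof (abs3 _ _ _ _ _ _ HLp Hq Hdq). pose proof (abs3 _ _ _ _ _ _ Hp HLq Hdq).
    eapply Rle_trans. apply abs4. lra. }
  assert (0 < q' * q^2) by (apply Rmult_lt_0_compat; nra).
  assert (c^3 <= q' * q^2). { assert (c * c <= q * q) by nra. simpl. nra. }
  unfold Rdiv. rewrite Rabs_mult. rewrite Rabs_inv. rewrite (Rabs_pos_eq (q' * q^2)) by lra.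
  assert (0 < c^3) by (apply pow_lt; auto).
  assert (/ (q' * q^2) <= / c^3) by (apply Rinv_le_contravar; auto).
  pose proof (Rabs_pos N).
  assert (Rabs N * / (q' * q^2) <= (4 * M^2 * MA * MB^2 * Hh^2) * / c^3).
  { apply Rmult_le_compat; auto. left; apply Rinv_0_lt_compat; auto. }
  replace (4 * M ^ 2 * MA * MB ^ 2 * / c ^ 3 * Hh ^ 2) with (4 * M ^ 2 * MA * MB ^ 2 * Hh ^ 2 * / c ^ 3) by ring. auto. Qed.

Definition Cdes (m n : nat) (A B : tensor) (c : R) : R :=
  4 * INR m ^ 2 * MT n m A * MT n m B ^ 2 / c ^ 3.

Lemma descent : forall m n A B x y c, symmetric_tensor m n A -> symmetric_tensor m n B ->
  box n x -> box n y -> 0 < c -> c <= Txm m n B x -> c <= Txm m n B y ->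
  Rabs (lam m n A B y - lam m n A B x - inner n (grad m n A B x) (fun i => y i - x i))
    <= Cdes m n A B c * (Hn n (fun i => y i - x i))^2.
Proof. intros m n A B x y c HA HB Hx Hy Hc Hcx Hcy.
  set (h := fun i => y i - x i).
  rewrite grad_inner.
  pose proof (Lin_Txm m n A x h HA) as LA. pose proof (Lin_Txm m n B x h HB) as LB.
  assert (Eg : INR m / Txm m n B x * (inner n h (Txm1 m n A x) - lam m n A B x * inner n h (Txm1 m n B x))
     = (Lin n m A x h - Txm m n A x / Txm m n B x * Lin n m B x h) / Txm m n B x).
  { rewrite LA, LB. unfold lam. field. lra. }
  rewrite Eg. unfold lam. unfold Cdes.
  apply quot_bound; rewrite ?Txm_Tk; auto.
  - apply Tk_bound; auto.
  - apply Tk_bound; auto.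
  - apply Lin_bound; auto.
  - apply Tk_rem; auto.
  - apply Tk_delta; auto.
  - apply Tk_rem; auto.
  - apply Lin_bound; auto.
Qed.

Lemma lam_bound : forall m n A B x c, box n x -> 0 < c -> c <= Txm m n B x -> lam m n A B x <= MT n m A / c.
Proof. intros. unfold lam. pose proof (Tk_bound n m A x H). rewrite <- Txm_Tk in H2.
  apply Rabs_le_between in H2 || idtac.
  assert (Txm m n A x <= MT n m A) by (pose proof (Rle_abs (Txm m n A x)); lra).
  pose proof (MT_nonneg n m A).
  unfold Rdiv. apply Rle_trans with (MT n m A * / Txm m n B x).
  apply Rmult_le_compat_r; auto. left; apply Rinv_0_lt_compat; lra.
  apply Rmult_le_compat_l; auto. apply Rinv_le_contravar; auto. Qed.

Lemma strict_ge : forall phi : nat -> nat, (forall j, (phi j < phi (S j))%nat) -> forall j, (j <= phi j)%nat.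
Proof. intros phi H j. induction j. lia. specialize (H j). lia. Qed.

Lemma strict_mono : forall phi : nat -> nat, (forall j, (phi j < phi (S j))%nat) -> forall i j, (i <= j)%nat -> (phi i <= phi j)%nat.
Proof. intros phi H i j Hij. induction Hij. lia. specialize (H m). lia. Qed.

Lemma cv_subseq : forall u l (phi : nat -> nat), (forall j, (phi j < phi (S j))%nat) -> Un_cv u l -> Un_cv (fun j => u (phi j)) l.
Proof. intros u l phi Hphi Hu eps Heps. destruct (Hu eps Heps) as [N HN]. exists N. intros j Hj.
  apply HN. pose proof (strict_ge phi Hphi j). lia. Qed.

Lemma cv_const : forall c, Un_cv (fun _ => c) c.
Proof. intros c eps He. exists 0%nat. intros. unfold Rdist || unfold R_dist. replace (c - c) with 0 by ring. rewrite Rabs_R0; auto. Qed.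

Lemma cv_shift : forall u l, Un_cv u l -> Un_cv (fun j => u (S j)) l.
Proof. intros u l H eps He. destruct (H eps He) as [N HN]. exists N. intros. apply HN. lia. Qed.

Lemma cv_dominated : forall (a b : nat -> R) l C, Un_cv a 0 -> (forall j, Rabs (b j - l) <= C * a j) -> Un_cv b l.
Proof. intros a b l C Ha Hb eps He.
  destruct (Ha (eps / (Rabs C + 1))) as [N HN]. apply Rdiv_lt_0_compat; auto. pose proof (Rabs_pos C); lra.
  exists N. intros j Hj. specialize (HN j Hj). unfold R_dist in *. rewrite Rminus_0_r in HN.
  specialize (Hb j). pose proof (Rabs_pos C). pose proof (Rle_abs C).
  assert (C * a j <= Rabs C * Rabs (a j)). { rewrite <- Rabs_mult. apply Rle_abs. }
  assert (Rabs (a j) * (Rabs C + 1) < eps). { apply Rmult_lt_reg_r with (/ (Rabs C + 1)). apply Rinv_0_lt_compat; lra.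
     rewrite Rmult_assoc, Rinv_r by lra. rewrite Rmult_1_r. auto. }
  pose proof (Rabs_pos (a j)). nra. Qed.

Lemma cv_sumR : forall n (f : nat -> nat -> R) (l : nat -> R),
  (forall i, (i < n)%nat -> Un_cv (fun j => f j i) (l i)) -> Un_cv (fun j => sumR n (f j)) (sumR n l).
Proof. induction n; intros f l H. simpl. apply cv_const.
  simpl. apply CV_plus. apply IHn. intros; apply H; lia. apply H; lia. Qed.

Lemma cv_abs0 : forall u l, Un_cv u l -> Un_cv (fun j => Rabs (u j - l)) 0.
Proof. intros u l H eps He. destruct (H eps He) as [N HN]. exists N. intros j Hj. specialize (HN j Hj).
  unfold R_dist in *. rewrite Rminus_0_r, Rabs_Rabsolu. auto. Qed.

Lemma cv_Hn : forall n (xs : nat -> vec) xstar, (forall i, (i < n)%nat -> Un_cv (fun j => xs j i) (xstar i)) ->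
  Un_cv (fun j => Hn n (fun i => xs j i - xstar i)) 0.
Proof. intros. unfold Hn. rewrite <- (sumR_zero n). apply cv_sumR. intros. apply cv_abs0. auto. Qed.

Lemma cv_Hn' : forall n (xs : nat -> vec) xstar, (forall i, (i < n)%nat -> Un_cv (fun j => xs j i) (xstar i)) ->
  Un_cv (fun j => Hn n (fun i => xstar i - xs j i)) 0.
Proof. intros. intros eps He. destruct (cv_Hn n xs xstar H eps He) as [N HN]. exists N.
  intros j Hj. specialize (HN j Hj). unfold Hn in *. rewrite (sumR_ext n (fun i => Rabs (xstar i - xs j i)) (fun i => Rabs (xs j i - xstar i))); auto.
  intros; apply Rabs_minus_sym. Qed.

Lemma cv_Tk : forall n k T (xs : nat -> vec) xstar, (forall j, box n (xs j)) -> box n xstar ->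
  (forall i, (i < n)%nat -> Un_cv (fun j => xs j i) (xstar i)) ->
  Un_cv (fun j => Tk n k T (xs j)) (Tk n k T xstar).
Proof. intros. apply cv_dominated with (a := fun j => Hn n (fun i => xs j i - xstar i)) (C := INR k * MT n k T).
  apply cv_Hn; auto. intros. apply (Tk_delta n k T xstar (xs j)); auto. Qed.

Lemma cv_inv : forall u l, l <> 0 -> Un_cv u l -> Un_cv (fun j => / u j) (/ l).
Proof. intros. apply (continuity_seq (fun x => / x) u l); auto.
  apply (continuity_pt_inv (fun x => x)); auto. apply derivable_continuous_pt. apply derivable_pt_id. Qed.

Lemma cv_div : forall u v lu lv, lv <> 0 -> Un_cv u lu -> Un_cv v lv -> Un_cv (fun j => u j / v j) (lu / lv).
Proof. intros. unfold Rdiv. apply CV_mult; auto. apply cv_inv; auto. Qed.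

Lemma cv_le_const : forall u l c, Un_cv u l -> (forall j, c <= u j) -> c <= l.
Proof. intros. apply (Rle_cv_lim (Un:=fun _ => c) (Vn:=u)); auto. apply cv_const. Qed.

Lemma cv_le_const' : forall u l c, Un_cv u l -> (forall j, u j <= c) -> l <= c.
Proof. intros. apply (Rle_cv_lim (Un:=u) (Vn:=fun _ => c)); auto. apply cv_const. Qed.

Lemma summable_cv0 : forall (D : nat -> R) M, (forall k, 0 <= D k) -> (forall N, sumR N D <= M) -> Un_cv D 0.
Proof. intros D M HD HM.
  assert (Hg : Un_growing (fun N => sumR N D)). { intros N. simpl. pose proof (HD N). lra. }
  assert (Hb : has_ub (fun N => sumR N D)). { exists M. intros x [N HN]. subst. auto. }
  destruct (growing_cv _ Hg Hb) as [l Hl].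
  pose proof (CV_minus _ _ _ _ (cv_shift _ _ Hl) Hl). simpl in H.
  replace 0 with (l - l) by ring.
  intros eps He. destruct (H eps He) as [N HN]. exists N. intros j Hj. specialize (HN j Hj).
  replace (D j) with (sumR j D + D j - sumR j D) by ring. auto. Qed.

Lemma BW1 : forall u : nat -> R, (forall k, 0 <= u k <= 1) ->
  exists (phi : nat -> nat) l, (forall j, (phi j < phi (S j))%nat) /\ Un_cv (fun j => u (phi j)) l.
Proof. intros u Hu. destruct (Bolzano_Weierstrass u (fun c => 0 <= c <= 1) (compact_P3 0 1) Hu) as [l Hl].
  assert (Hex : forall N j : nat, exists p, (N <= p)%nat /\ Rabs (u p - l) < / INR (S j)).
  { intros N j. assert (Hpos : 0 < / INR (S j)) by (apply Rinv_0_lt_compat; apply lt_0_INR; lia).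
    destruct (Hl (disc l (mkposreal _ Hpos)) N) as [p [Hp1 Hp2]].
    exists (mkposreal _ Hpos). intros y Hy. auto. exists p. split; auto. }
  set (F := fun N j => proj1_sig (constructive_indefinite_description _ (Hex N j))).
  assert (HF : forall N j, (N <= F N j)%nat /\ Rabs (u (F N j) - l) < / INR (S j)).
  { intros. unfold F. destruct (constructive_indefinite_description _ (Hex N j)). simpl. auto. }
  set (phi := fix phi j := match j with O => F O O | S j' => F (S (phi j')) (S j') end).
  exists phi, l. split.
  - intros j. simpl. destruct (HF (S (phi j)) (S j)). lia.
  - intros eps He. destruct (INR_archimed eps 1 He) as [N HN]. exists N. intros j Hj.
    unfold R_dist.
    assert (Rabs (u (phi j) - l) < / INR (S j)). { destruct j; simpl; apply HF. }
    assert (/ INR (S j) <= / INR (S N)). { apply Rinv_le_contravar. apply lt_0_INR; lia. apply le_INR; lia. }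
    assert (/ INR (S N) < eps). { rewrite S_INR. apply Rmult_lt_reg_r with (INR N + 1). pose proof (pos_INR N); lra.
      rewrite Rinv_l by (pose proof (pos_INR N); lra). nra. }
    lra. Qed.

Lemma BWn : forall n (xs : nat -> vec), (forall j i, (i < n)%nat -> 0 <= xs j i <= 1) ->
  forall k, (k <= n)%nat -> exists (phi : nat -> nat) (xstar : vec), (forall j, (phi j < phi (S j))%nat) /\
    forall i, (i < k)%nat -> Un_cv (fun j => xs (phi j) i) (xstar i).
Proof. intros n xs Hb k. induction k; intros Hk.
  - exists (fun j => j), (fun _ => 0). split. intros; lia. intros; lia.
  - destruct (IHk ltac:(lia)) as [phi [xstar [Hphi Hcv]]].
    destruct (BW1 (fun j => xs (phi j) k)) as [psi [l [Hpsi Hl]]]. intros; apply Hb; lia.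
    exists (fun j => phi (psi j)), (fun i => if Nat.eq_dec i k then l else xstar i). split.
    + intros j. pose proof (strict_mono phi Hphi (S (psi j)) (psi (S j)) (Hpsi j)). specialize (Hphi (psi j)). lia.
    + intros i Hi. destruct (Nat.eq_dec i k). subst. auto.
      apply (cv_subseq (fun j => xs (phi j) i) (xstar i) psi Hpsi). apply Hcv. lia. Qed.

Definition inK (n : nat) (x : vec) : Prop :=
  (forall i, (i < n)%nat -> 0 <= x i) /\ inner n x x <= 1 /\ 1 <= sumR n x.

Lemma inner_nonneg : forall n x, 0 <= inner n x x.
Proof. intros. apply sumR_nonneg. intros. nra. Qed.

Lemma inner_term : forall n x i, (i < n)%nat -> x i * x i <= inner n x x.
Proof. intros. apply (sumR_term_le n (fun i => x i * x i)); auto. intros; nra. Qed.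

Lemma inK_box : forall n x, inK n x -> box n x.
Proof. intros n x [H1 [H2 H3]] i Hi. pose proof (inner_term n x i Hi). pose proof (H1 i Hi).
  rewrite Rabs_pos_eq by auto. nra. Qed.

Lemma Omega_inK : forall n x, Omega n x -> inK n x.
Proof. intros n x [H1 H2]. split; auto. split. lra.
  rewrite <- H1. apply sumR_le. intros i Hi. pose proof (inner_term n x i Hi). pose proof (H2 i Hi). nra. Qed.

Lemma sum_nonzero : forall n x, 1 <= sumR n x -> Defs.nonzero n x.
Proof. intros. apply NNPP. intro Hn. assert (sumR n x = 0).
  { rewrite <- (sumR_zero n). apply sumR_ext. intros. apply NNPP. intro. apply Hn. exists i. auto. }
  lra. Qed.

Lemma inK_nonzero : forall n x, inK n x -> Defs.nonzero n x.
Proof. intros n x [_ [_ H]]. apply sum_nonzero; auto. Qed.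

Lemma inK_n : forall n x, inK n x -> (1 <= n)%nat.
Proof. intros n x [_ [_ H]]. destruct n. simpl in H. lra. lia. Qed.

Lemma inK_r2 : forall n x, inK n x -> 1 <= INR n * inner n x x.
Proof. intros n x [H1 [H2 H3]]. pose proof (sumR_CS n x).
  rewrite (sumR_ext n (fun i => Rabs (x i)) x) in H by (intros; apply Rabs_pos_eq; auto).
  change (sumR n (fun i => x i * x i)) with (inner n x x) in H. nra. Qed.

Lemma inner_comb : forall n a b u v w, inner n (fun i => a * u i + b * v i) w = a * inner n u w + b * inner n v w.
Proof. intros. unfold inner. rewrite (sumR_ext n _ (fun i => a * (u i * w i) + b * (v i * w i))) by (intros; ring).
  rewrite sumR_plus, !sumR_scal. auto. Qed.

Lemma inner_minus_sq : forall n y a, inner n (fun i => y i - a i) (fun i => y i - a i) = inner n y y - 2 * inner n y a + inner n a a.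
Proof. intros. unfold inner. rewrite (sumR_ext n _ (fun i => (y i * y i - 2 * (y i * a i)) + a i * a i)) by (intros; ring).
  rewrite sumR_plus, sumR_minus, sumR_scal. auto. Qed.

Lemma inner_cross : forall n x z, 2 * inner n x z <= inner n x x + inner n z z.
Proof. intros. pose proof (inner_nonneg n (fun i => x i - z i)). rewrite inner_minus_sq in H. lra. Qed.

Lemma inK_convex : forall n x z a, inK n x -> Omega n z -> 0 <= a <= 1 -> inK n (fun i => x i + a * (z i - x i)).
Proof. intros n x z a [Hx1 [Hx2 Hx3]] [Hz1 Hz2] Ha. split; [|split].
  - intros i Hi. pose proof (Hx1 i Hi). pose proof (Hz2 i Hi). nra.
  - rewrite (inner_ext n _ _ (fun i => (1 - a) * x i + a * z i) (fun i => (1 - a) * x i + a * z i)) by (intros; ring).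
    rewrite inner_comb. rewrite (inner_comm n x), (inner_comm n z). rewrite !inner_comb. rewrite (inner_comm n z x) in *.
    pose proof (inner_cross n x z). set (X := inner n x x) in *. set (XZ := inner n x z) in *.
    assert (a*(1-a)*(2*XZ) <= a*(1-a)*(X+1)) by (apply Rmult_le_compat_l; nra).
    assert (0 <= (1-a)*(1-a)) by nra. rewrite Hz1. nra.
  - rewrite (sumR_ext n _ (fun i => (1 - a) * x i + a * z i)) by (intros; ring). rewrite sumR_plus, !sumR_scal.
    pose proof (Omega_inK n z (conj Hz1 Hz2)) as [_ [_ Hz3]]. nra. Qed.

Lemma inK_closed : forall n (xs : nat -> vec) xstar, (forall j, inK n (xs j)) ->
  (forall i, (i < n)%nat -> Un_cv (fun j => xs j i) (xstar i)) -> inK n xstar.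
Proof. intros n xs xstar HK Hcv. split; [|split].
  - intros i Hi. apply (cv_le_const _ _ 0 (Hcv i Hi)). intros j. apply (HK j); auto.
  - apply (cv_le_const' (fun j => inner n (xs j) (xs j))). unfold inner. apply cv_sumR. intros. apply CV_mult; auto.
    intros j. apply (HK j).
  - apply (cv_le_const (fun j => sumR n (xs j))). apply cv_sumR; auto. intros j. apply (HK j). Qed.

Lemma cB_exists : forall m n B, pos_def m n B -> exists c, 0 < c /\ forall x, inK n x -> c <= Txm m n B x.
Proof. intros m n B HB. apply NNPP. intro Hne.
  assert (Hex : forall j : nat, exists x, inK n x /\ Txm m n B x < / INR (S j)).
  { intros j. apply NNPP. intro H. apply Hne. exists (/ INR (S j)). split. apply Rinv_0_lt_compat, lt_0_INR; lia.
    intros x Hx. apply Rnot_lt_le. intro. apply H. exists x. auto. }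
  set (xs := fun j => proj1_sig (constructive_indefinite_description _ (Hex j))).
  assert (Hxs : forall j, inK n (xs j) /\ Txm m n B (xs j) < / INR (S j)).
  { intros. unfold xs. destruct (constructive_indefinite_description _ (Hex j)). auto. }
  destruct (BWn n xs) with (k := n) as [phi [xstar [Hphi Hcv]]]; auto.
  { intros j i Hi. destruct (Hxs j) as [HK _]. pose proof (inK_box n _ HK i Hi). destruct HK as [HK _]. pose proof (HK i Hi).
    rewrite Rabs_pos_eq in H by auto. lra. }
  assert (HK : inK n xstar). { apply (inK_closed n (fun j => xs (phi j))); auto. intros; apply Hxs. }
  pose proof (HB xstar (inK_nonzero n xstar HK)).
  assert (Hc : Un_cv (fun j => Txm m n B (xs (phi j))) (Txm m n B xstar)).
  { apply cv_Tk; auto. intros; apply inK_box; apply Hxs. apply inK_box; auto. }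
  assert (Txm m n B xstar <= 0).
  { apply (Rle_cv_lim (Un := fun j => Txm m n B (xs (phi j))) (Vn := fun j => / INR (S (phi j)))); auto.
    intros j. left. apply Hxs.
    intros eps He. destruct (INR_archimed eps 1 He) as [N HN]. exists N. intros j Hj. unfold R_dist. rewrite Rminus_0_r.
    pose proof (strict_ge phi Hphi j).
    rewrite Rabs_pos_eq by (left; apply Rinv_0_lt_compat, lt_0_INR; lia).
    assert (/ INR (S (phi j)) <= / INR (S N)). { apply Rinv_le_contravar. apply lt_0_INR; lia. apply le_INR; lia. }
    assert (/ INR (S N) < eps). { rewrite S_INR. apply Rmult_lt_reg_r with (INR N + 1). pose proof (pos_INR N); lra.
      rewrite Rinv_l by (pose proof (pos_INR N); lra). nra. }
    lra. }
  lra. Qed.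

Lemma proj_var : forall n P y w, is_proj n P -> Omega n w -> inner n y w <= inner n y (P y).
Proof. intros n P y w HP Hw. destruct (HP y) as [HPy Hmin]. specialize (Hmin w Hw). unfold vnorm in Hmin.
  apply sqrt_le_0 in Hmin; try apply inner_nonneg. rewrite !inner_minus_sq in Hmin.
  destruct HPy as [HPy _]. destruct Hw as [Hw _]. lra. Qed.

Lemma inner_scal : forall n c u w, inner n (fun i => c * u i) w = c * inner n u w.
Proof. intros. unfold inner. rewrite <- sumR_scal. apply sumR_ext; intros; ring. Qed.

Lemma inner_e : forall n j v, (j < n)%nat -> inner n (fun i => if Nat.eq_dec i j then 1 else 0) v = v j.
Proof. intros. unfold inner. rewrite (sumR_ext n _ (fun i => if Nat.eq_dec i j then v j else 0)).
  apply sumR_single; auto. intros. destruct (Nat.eq_dec i j); subst; ring. Qed.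

Lemma inner_lin2 : forall n u v c e, inner n u (fun i => v i + c * e i) = inner n u v + c * inner n u e.
Proof. intros. rewrite inner_comm. rewrite (inner_ext n _ u (fun i => 1 * v i + c * e i) u) by (intros; ring || auto).
  rewrite inner_comb. rewrite (inner_comm n v), (inner_comm n e). ring. Qed.

Lemma PL : forall n x gv b, Omega n x -> inner n gv x = 0 -> 0 < b ->
  (forall w, Omega n w -> 0 < inner n gv w -> b * inner n gv w <= 1 - inner n x w) ->
  forall j, (j < n)%nat -> gv j <= 0.
Proof. intros n x gv b Hx Hgx Hb Hw j Hj. apply Rnot_lt_le. intro Hg.
  set (eps := b * gv j / 2). assert (Heps : 0 < eps) by (unfold eps; nra).
  set (e := fun i : nat => if Nat.eq_dec i j then 1 else 0).
  set (v := fun i => x i + eps * e i).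
  destruct Hx as [Hxx Hx0]. pose proof (Hx0 j Hj) as Hxj.
  assert (Hxj1 : x j <= 1). { pose proof (inner_term n x j Hj). nra. }
  assert (Hvv : inner n v v = 1 + 2 * eps * x j + eps^2).
  { assert (E1 : inner n v v = inner n v x + eps * inner n v e) by (unfold v at 2; apply inner_lin2).
    assert (E2 : inner n v x = inner n x x + eps * inner n x e) by (rewrite inner_comm; unfold v; apply inner_lin2).
    assert (E3 : inner n v e = v j) by (rewrite inner_comm; unfold e; apply inner_e; auto).
    assert (E4 : inner n x e = x j) by (rewrite inner_comm; unfold e; apply inner_e; auto).
    rewrite E1, E2, E3, E4, Hxx. unfold v, e. destruct (Nat.eq_dec j j); [|lia]. ring. }


  set (N := sqrt (1 + 2 * eps * x j + eps^2)).
  assert (HN0 : 0 < N) by (apply sqrt_lt_R0; nra).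
  assert (HNN : N * N = 1 + 2 * eps * x j + eps^2) by (apply sqrt_sqrt; nra).
  set (w := fun i => / N * v i).
  assert (Hom : Omega n w).
  { split. unfold w. rewrite inner_scal, inner_comm, inner_scal. rewrite Hvv. rewrite <- HNN. field. lra.
    intros i Hi. unfold w, v, e. apply Rmult_le_pos. left; apply Rinv_0_lt_compat; auto.
    pose proof (Hx0 i Hi). destruct (Nat.eq_dec i j); nra. }
  assert (Hgw : inner n gv w = / N * (eps * gv j)).
  { unfold w. rewrite inner_comm, inner_scal, inner_comm. unfold v. rewrite inner_lin2, Hgx.
    rewrite inner_comm. unfold e. rewrite inner_e by auto. ring. }
  assert (Hxw : inner n x w = / N * (1 + eps * x j)).
  { unfold w. rewrite inner_comm, inner_scal, inner_comm. unfold v. rewrite inner_lin2, Hxx.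
    rewrite inner_comm. unfold e. rewrite inner_e by auto. ring. }
  assert (Hpos : 0 < inner n gv w). { rewrite Hgw. apply Rmult_lt_0_compat. apply Rinv_0_lt_compat; auto. nra. }
  specialize (Hw w Hom Hpos). rewrite Hgw, Hxw in Hw.
  assert (b * (eps * gv j) <= N - 1 - eps * x j).
  { apply Rmult_le_reg_l with (/ N). apply Rinv_0_lt_compat; auto.
    replace (/ N * (N - 1 - eps * x j)) with (1 - / N * (1 + eps * x j)) by (field; lra). nra. }
  assert (N <= 1 + eps * x j + eps^2 / 2).
  { assert (Hsq: (1 + eps*x j + eps^2/2) * (1 + eps*x j + eps^2/2) = N*N + (eps^2*(x j*x j) + eps^3*x j + eps^4/4)) by (rewrite HNN; field).
    assert (0 <= eps^2*(x j*x j)) by (apply Rmult_le_pos; [apply pow2_ge_0| nra]).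
    assert (0 <= eps^3*x j) by (apply Rmult_le_pos; [apply pow_le; lra| lra]).
    assert (0 <= eps^4) by (apply pow_le; lra).
    apply Rsqr_incr_0_var. unfold Rsqr. lra. nra. }
  assert (b * gv j <= eps / 2) by (apply Rmult_le_reg_l with eps; auto; nra).
  unfold eps in H1. nra. Qed.

Lemma TEiCP_of : forall m n A B x, (1 <= m)%nat -> pos_def m n B -> Omega n x ->
  (forall i, (i < n)%nat -> grad m n A B x i <= 0) -> TEiCP m n A B (lam m n A B x) x.
Proof. intros m n A B x Hm HB Hx Hg.
  pose proof (HB x (inK_nonzero n x (Omega_inK n x Hx))) as Hq.
  assert (HmR : 0 < INR m) by (apply lt_0_INR; lia).
  split; [|split; [|split]].
  - apply inK_nonzero, Omega_inK; auto.
  - apply Hx.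
  - intros i Hi. specialize (Hg i Hi). unfold grad in Hg.
    assert (0 < INR m / Txm m n B x) by (apply Rdiv_lt_0_compat; lra).
    assert (Txm1 m n A x i - lam m n A B x * Txm1 m n B x i <= 0).
    { apply Rnot_lt_le. intro. assert (0 < INR m / Txm m n B x * (Txm1 m n A x i - lam m n A B x * Txm1 m n B x i)) by (apply Rmult_lt_0_compat; auto). lra. }
    lra.
  - rewrite (inner_ext n x _ x (fun i => lam m n A B x * Txm1 m n B x i + (-1) * Txm1 m n A x i)) by (intros; ring || auto).
    rewrite inner_lin2.
    assert (E1 : inner n x (fun i => lam m n A B x * Txm1 m n B x i) = lam m n A B x * inner n x (Txm1 m n B x)).
    { rewrite inner_comm, inner_scal, inner_comm. auto. }
    rewrite E1, !Euler_Txm by auto. unfold lam. field. lra. Qed.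

Lemma KKT_of : forall m n A B x, (1 <= m)%nat -> pos_def m n B -> Omega n x ->
  (forall i, (i < n)%nat -> grad m n A B x i <= 0) -> constrained_stationary m n A B x.
Proof. intros m n A B x Hm HB Hx Hg. split; auto. exists 0, (fun i => - grad m n A B x i). split; [|split].
  - intros; ring.
  - intros i Hi. specialize (Hg i Hi). lra.
  - pose proof (HB x (inK_nonzero n x (Omega_inK n x Hx))) as Hq.
    rewrite (inner_ext n _ x (fun i => (-1) * grad m n A B x i) x) by (intros; ring || auto).
    rewrite inner_scal. rewrite grad_Euler; auto. ring. lra. Qed.

Lemma Omega_ext : forall n x y, (forall i, (i < n)%nat -> x i = y i) -> Omega n x -> Omega n y.
Proof. intros n x y H [H1 H2]. split. rewrite <- (inner_ext n x x y y); auto. intros. rewrite <- H; auto. Qed.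

Lemma vnorm_zero : forall n g, vnorm n g = 0 -> forall i, (i < n)%nat -> g i = 0.
Proof. intros. unfold vnorm in H. apply sqrt_eq_0 in H; [|apply inner_nonneg].
  pose proof (inner_term n g i H0). assert (g i * g i = 0) by (pose proof (Rle_0_sqr (g i)); unfold Rsqr in *; lra). nra. Qed.

Lemma arm_real : forall G V r s c t' beta bu Cd N rho lamu lamw,
  0 < r <= 1 -> 1 <= N * r -> 0 < s <= 1 -> c = r * (1 - s) + s -> t' = s / c ->
  0 < beta <= bu -> 0 <= Cd -> 0 <= V -> r * r * V <= 2 * beta * G ->
  lamu + t' * G - Cd * N * (t' * t') * V <= lamw ->
  lamw < lamu + rho * s * (G / r) -> 0 < rho < 1 ->
  (1 - rho) / (2 * Cd * N^4 * bu + rho * N) < s.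
Proof. intros G V r s c t' beta bu Cd N rho lamu lamw Hr HNr Hs Hc Ht Hb HCd HV Hproj Hdesc Hfail Hrho.
  set (ir := / r). assert (Hir : r * ir = 1) by (unfold ir; field; lra).
  assert (Hir1 : 1 <= ir). { unfold ir. rewrite <- Rinv_1. apply Rinv_le_contravar; lra. }
  assert (HirN : ir <= N). { apply Rmult_le_reg_l with r. lra. nra. }
  assert (Hc1 : r <= c) by nra. assert (Hc2 : c <= 1) by nra. assert (Hc0 : 0 < c) by lra.
  assert (Htc : t' * c = s) by (subst t'; field; lra).
  assert (Ht0 : 0 < t') by (subst t'; apply Rdiv_lt_0_compat; lra).
  assert (Htr : t' <= s * ir). { apply Rmult_le_reg_r with c; auto. rewrite Htc. 
     assert (s * ir * c >= s * ir * r) by (apply Rle_ge, Rmult_le_compat_l; [apply Rmult_le_pos; lra| lra]). 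
     replace (s * ir * r) with s in H by (unfold ir; field; lra). lra. }
  assert (HG : 0 <= G). { assert (0 <= r * r * V) by (apply Rmult_le_pos; nra). nra. }
  assert (H3 : t' * G - Cd * N * (t' * t') * V < rho * s * (G * ir)) by (unfold Rdiv in Hfail; fold ir in Hfail; lra).
  assert (HG0 : 0 < G).
  { destruct HG as [HG|HG]; auto. subst G. assert (r * r * V <= 0) by lra.
    assert (V = 0). { assert (0 < r * r) by nra. nra. } subst V. lra. }
  assert (H5 : G - Cd * N * t' * V < rho * c * G * ir).
  { apply Rmult_lt_reg_l with t'; auto.
    replace (t' * (rho * c * G * ir)) with (rho * (t' * c) * (G * ir)) by ring. rewrite Htc. nra. }
  assert (HV2 : V <= 2 * beta * G * (ir * ir)).
  { replace V with (r * r * V * (ir * ir)) by (unfold ir; field; lra).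
    apply Rmult_le_compat_r. nra. auto. }
  assert (H6 : Cd * N * t' * V <= Cd * N * (s * ir) * (2 * bu * G * (ir * ir))).
  { assert (0 <= Cd * N) by nra.
    assert (V <= 2 * bu * G * (ir * ir)). { apply Rle_trans with (2 * beta * G * (ir * ir)); auto.
      apply Rmult_le_compat_r. nra. apply Rmult_le_compat_r; lra. }
    assert (t' * V <= (s * ir) * (2 * bu * G * (ir * ir))) by (apply Rmult_le_compat; lra).
    replace (Cd * N * t' * V) with ((Cd * N) * (t' * V)) by ring.
    replace (Cd * N * (s * ir) * (2 * bu * G * (ir * ir))) with ((Cd * N) * ((s * ir) * (2 * bu * G * (ir * ir)))) by ring.
    apply Rmult_le_compat_l; auto. }
  assert (H7 : rho * c * G * ir <= rho * G + rho * G * s * ir).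
  { replace (rho * c * G * ir) with (rho * G * (c * ir)) by ring.
    assert (c * ir = 1 - s + s * ir) by (rewrite Hc; unfold ir; field; lra).
    rewrite H. assert (0 <= rho * G) by nra. nra. }
  assert (H8 : 1 - rho < s * (2 * Cd * N * bu * (ir * ir * ir) + rho * ir)).
  { apply Rmult_lt_reg_r with G; auto. nra. }
  assert (H9 : 2 * Cd * N * bu * (ir * ir * ir) + rho * ir <= 2 * Cd * N^4 * bu + rho * N).
  { assert (ir * ir * ir <= N * N * N). { assert (ir*ir <= N*N) by (apply Rmult_le_compat; lra). apply Rmult_le_compat; nra. }
    assert (0 <= 2 * Cd * N * bu) by (repeat apply Rmult_le_pos; lra).
    assert (2 * Cd * N * bu * (ir * ir * ir) <= 2 * Cd * N * bu * (N * N * N)) by (apply Rmult_le_compat_l; auto).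
    nra. }
  assert (Hden : 0 < 2 * Cd * N^4 * bu + rho * N).
  { assert (0 <= 2 * Cd * N^4 * bu). { assert (0 <= N^4) by (apply pow_le; nra). assert (0 <= bu) by lra.
      repeat apply Rmult_le_pos; lra. } nra. }
  apply Rmult_lt_reg_r with (2 * Cd * N^4 * bu + rho * N); auto.
  unfold Rdiv. rewrite Rmult_assoc, Rinv_l by lra. rewrite Rmult_1_r.
  assert (s * (2 * Cd * N * bu * (ir * ir * ir) + rho * ir) <= s * (2 * Cd * N ^ 4 * bu + rho * N)) by (apply Rmult_le_compat_l; lra).
  lra. Qed.

Lemma norm_real : forall X XZ r a alpha beta bu D,
  X = r * r -> 0 < r <= 1 -> 0 < a <= alpha -> alpha <= 1 -> r - beta * D <= XZ -> XZ <= r ->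
  0 <= D -> 0 < beta <= bu ->
  X + 2 * a * (r * (1 - r)) - 2 * bu * D <= (1 - alpha) * ((1 - alpha) * X + alpha * XZ) + alpha * ((1 - alpha) * XZ + alpha * 1).
Proof. intros X XZ r a alpha beta bu D HX Hr Ha Hal Hxz1 Hxz2 HD Hb.
  set (e := r - XZ). assert (He0 : 0 <= e) by (unfold e; lra). assert (He1 : e <= bu * D) by (unfold e; nra).
  replace ((1 - alpha) * ((1 - alpha) * X + alpha * XZ) + alpha * ((1 - alpha) * XZ + alpha * 1))
     with (X + 2 * alpha * (r * (1 - r)) + alpha * alpha * ((1 - r) * (1 - r)) - 2 * alpha * (1 - alpha) * e)
     by (unfold e; subst X; ring).
  assert (0 <= r * (1 - r)) by nra.
  assert (2 * a * (r * (1 - r)) <= 2 * alpha * (r * (1 - r))) by nra.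
  assert (0 <= alpha * alpha * ((1 - r) * (1 - r))) by (apply Rmult_le_pos; nra).
  assert (alpha * (1 - alpha) <= 1) by nra.
  assert (2 * alpha * (1 - alpha) * e <= 2 * e) by nra.
  lra. Qed.

Lemma inner_lin1 : forall n a b c v, inner n (fun i => a i + c * b i) v = inner n a v + c * inner n b v.
Proof. intros. rewrite inner_comm, inner_lin2, !(inner_comm n v). auto. Qed.

Lemma inner_minus1 : forall n a b v, inner n (fun i => a i - b i) v = inner n a v - inner n b v.
Proof. intros. rewrite (inner_ext n _ v (fun i => a i + (-1) * b i) v) by (intros; ring || auto). rewrite inner_lin1. ring. Qed.

Lemma inner_minus2 : forall n a b v, inner n v (fun i => a i - b i) = inner n v a - inner n v b.
Proof. intros. rewrite inner_comm, inner_minus1, !(inner_comm n v). auto. Qed.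

Section Step.
Variables (m n : nat) (A B : tensor) (P : vec -> vec) (rho cB : R).
Hypotheses (Hm : (2 <= m)%nat) (HA : symmetric_tensor m n A) (HB : symmetric_tensor m n B)
  (HP : is_proj n P) (Hrho : 0 < rho < 1) (HcB : 0 < cB) (HcBK : forall y, inK n y -> cB <= Txm m n B y).

Local Notation g := (grad m n A B).
Local Notation lamf := (lam m n A B).

Lemma q_pos : forall y, inK n y -> Txm m n B y <> 0.
Proof. intros. pose proof (HcBK y H). lra. Qed.

Lemma gEuler : forall y, inK n y -> inner n (g y) y = 0.
Proof. intros. apply grad_Euler. lia. apply q_pos; auto. Qed.

Lemma step_F1 : forall x beta, inK n x -> 0 < beta ->
  let z := P (fun j => x j + beta * g x j) in
  let D := inner n (g x) (direction m n A B P x beta) in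
  D = inner n (g x) z /\ sqrt (inner n x x) <= inner n x z + beta * D /\ inner n x z <= sqrt (inner n x x) /\ 0 <= D
  /\ Omega n z.
Proof. intros x beta Hx Hb z D.
  set (X := inner n x x). set (r := sqrt X).
  assert (HX : 1 <= INR n * X) by (apply inK_r2; auto).
  assert (HX1 : X <= 1) by apply Hx.
  assert (HX0 : 0 < X). { destruct (Rle_lt_dec X 0); auto. pose proof (pos_INR n). nra. }
  assert (Hr : 0 < r) by (apply sqrt_lt_R0; auto).
  assert (Hrr : r * r = X) by (apply sqrt_sqrt; lra).
  set (u := fun i => / r * x i).
  assert (Hu : Omega n u). { split. unfold u. rewrite inner_scal, inner_comm, inner_scal. fold X. rewrite <- Hrr. field. lra.
    intros i Hi. unfold u. apply Rmult_le_pos. left; apply Rinv_0_lt_compat; auto. apply Hx; auto. }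
  assert (Hz : Omega n z) by (apply (HP _)).
  assert (HD : D = inner n (g x) z).
  { unfold D, direction. fold z. rewrite inner_minus2. rewrite gEuler; auto. ring. }
  assert (Hv : inner n (fun j => x j + beta * g x j) u <= inner n (fun j => x j + beta * g x j) z).
  { apply proj_var; auto. }
  rewrite !inner_lin1 in Hv.
  assert (E1 : inner n x u = r). { unfold u. rewrite inner_comm, inner_scal. fold X. rewrite <- Hrr. field. lra. }
  assert (E2 : inner n (g x) u = 0). { unfold u. rewrite inner_comm, inner_scal, inner_comm. rewrite gEuler; auto. ring. }
  rewrite E1, E2 in Hv. rewrite <- HD in Hv.
  assert (Hxz : inner n x z <= r).
  { assert (inner n x z = r * inner n u z). { unfold u. rewrite inner_scal. field. lra. }
    pose proof (inner_cross n u z). destruct Hu as [Hu _]. destruct Hz as [Hz _]. nra. }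
  split; [auto|]. split; [lra|]. split; [auto|]. split; [|auto].
  apply Rmult_le_reg_l with beta; auto. rewrite Rmult_0_r. lra. Qed.

Definition a0 (bu : R) : R := (1 - rho) / (2 * Cdes m n A B cB * INR n ^ 4 * bu + rho * INR n).

Lemma step_arm : forall x beta bu s, inK n x -> 0 < beta <= bu -> 0 < s <= 1 ->
  let d := direction m n A B P x beta in
  ~ armijo_ok m n A B rho x d s -> a0 bu < s.
Proof. intros x beta bu s Hx Hb Hs d Hfail.
  destruct (step_F1 x beta Hx ltac:(lra)) as [HD [HF1 [Hxz [HD0 Hz]]]].
  set (z := P (fun j => x j + beta * g x j)) in *.
  set (D := inner n (g x) (direction m n A B P x beta)) in *.
  set (X := inner n x x) in *. set (r := sqrt X) in *.
  assert (HX : 1 <= INR n * X) by (apply inK_r2; auto).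
  assert (HX1 : X <= 1) by apply Hx.
  assert (HX0 : 0 < X). { destruct (Rle_lt_dec X 0); auto. pose proof (pos_INR n). nra. }
  assert (Hr : 0 < r) by (apply sqrt_lt_R0; auto).
  assert (Hrr : r * r = X) by (apply sqrt_sqrt; lra).
  assert (Hr1 : r <= 1) by nra.
  set (u := fun i => / r * x i).
  assert (Hu : Omega n u). { split. unfold u. rewrite inner_scal, inner_comm, inner_scal. fold X. rewrite <- Hrr. field. lra.
    intros i Hi. unfold u. apply Rmult_le_pos. left; apply Rinv_0_lt_compat; auto. apply Hx; auto. }
  assert (HuK : inK n u) by (apply Omega_inK; auto).
  assert (Hxu : forall i, (i < n)%nat -> x i = r * u i). { intros. unfold u. field. lra. }
  set (v := fun i => z i - u i). set (V := inner n v v). set (G := inner n (g u) v).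
  assert (HguE : inner n (g u) u = 0) by (apply gEuler; auto).
  assert (Hgx : forall i, (i < n)%nat -> g x i = g u i / r).
  { intros. rewrite (grad_ext m n A B x (fun i => r * u i)) by auto. apply grad_scale. lia. lra. apply q_pos; auto. }
  assert (HDG : D = G / r).
  { rewrite HD. unfold G, v. rewrite inner_minus2, HguE, Rminus_0_r.
    rewrite (inner_ext n (g x) z (fun i => / r * g u i) z). rewrite inner_scal. unfold Rdiv. ring.
    intros. rewrite Hgx by auto. unfold Rdiv. ring. auto. }
  assert (Hxz2 : inner n x z = r * inner n u z).
  { rewrite (inner_ext n x z (fun i => r * u i) z) by auto. apply inner_scal. }
  assert (HV : V = 2 - 2 * inner n u z).
  { unfold V, v. rewrite inner_minus_sq. destruct Hu as [Hu _]. destruct Hz as [Hz _]. rewrite Hz, Hu, inner_comm. ring. }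
  assert (HV0 : 0 <= V) by apply inner_nonneg.
  assert (Hproj : r * r * V <= 2 * beta * G).
  { rewrite HV. rewrite Hxz2, HDG in HF1. 
    assert (r * (r * (1 - inner n u z)) <= r * (beta * (G / r))) by (apply Rmult_le_compat_l; lra).
    replace (r * (beta * (G / r))) with (beta * G) in H by (field; lra). nra. }
  set (c := r * (1 - s) + s). set (t' := s / c).
  assert (Hc0 : 0 < c) by (unfold c; nra).
  assert (Ht0 : 0 <= t' <= 1). { unfold t'. split. unfold Rdiv; apply Rmult_le_pos; [lra| left; apply Rinv_0_lt_compat; lra]. apply Rmult_le_reg_r with c; auto.
     unfold Rdiv. rewrite Rmult_assoc, Rinv_l by lra. unfold c; nra. }
  set (y' := fun i => u i + t' * (z i - u i)).
  assert (Hy'K : inK n y') by (apply inK_convex; auto; apply Omega_inK; auto).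
  assert (Hdesc := descent m n A B u y' cB HA HB (inK_box n u HuK) (inK_box n y' Hy'K) HcB (HcBK u HuK) (HcBK y' Hy'K)).
  assert (E1 : inner n (grad m n A B u) (fun i => y' i - u i) = t' * G).
  { unfold y'. rewrite (inner_ext n _ _ (grad m n A B u) (fun i => t' * v i)) by (intros; unfold v; ring || auto).
    rewrite inner_comm, inner_scal, inner_comm. auto. }
  assert (E2 : Hn n (fun i => y' i - u i) = t' * Hn n v).
  { unfold Hn, y', v. rewrite <- sumR_scal. apply sumR_ext. intros. replace (u i + t' * (z i - u i) - u i) with (t' * (z i - u i)) by ring.
    rewrite Rabs_mult, (Rabs_pos_eq t') by lra. auto. }
  assert (E3 : (Hn n v)^2 <= INR n * V) by apply sumR_CS.
  assert (HCd : 0 <= Cdes m n A B cB).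
  { unfold Cdes. pose proof (MT_nonneg n m A). pose proof (MT_nonneg n m B). pose proof (pos_INR m).
    apply Rmult_le_pos. repeat apply Rmult_le_pos; try lra; apply pow_le; lra. left; apply Rinv_0_lt_compat, pow_lt; auto. }
  rewrite E1, E2 in Hdesc.
  assert (Hdesc2 : lamf u + t' * G - Cdes m n A B cB * INR n * (t' * t') * V <= lamf y').
  { apply Rabs_le_between' in Hdesc || idtac.
    assert (Cdes m n A B cB * (t' * Hn n v) ^ 2 <= Cdes m n A B cB * INR n * (t' * t') * V).
    { replace ((t' * Hn n v)^2) with ((t' * t') * (Hn n v)^2) by ring.
      replace (Cdes m n A B cB * INR n * (t' * t') * V) with (Cdes m n A B cB * ((t' * t') * (INR n * V))) by ring.
      apply Rmult_le_compat_l; auto. apply Rmult_le_compat_l; auto. nra. }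
    pose proof (Rle_abs (lam m n A B u - lam m n A B y' + t' * G)).
    rewrite <- Rabs_Ropp in H0. replace (- (lam m n A B u - lam m n A B y' + t' * G)) with (lam m n A B y' - lam m n A B u - t' * G) in H0 by ring.
    lra. }
  assert (Hlx : lamf x = lamf u).
  { rewrite (lam_ext m n A B x (fun i => r * u i)) by auto. apply lam_scale; lra. }
  assert (Hlw : lamf (fun i => x i + s * d i) = lamf y').
  { rewrite (lam_ext m n A B _ (fun i => c * y' i)). apply lam_scale; lra.
    intros i Hi. unfold d, direction, y', t'. fold z. unfold u. unfold c. unfold c in Hc0. field. repeat split; lra. }
  unfold armijo_ok in Hfail.  fold d in D. 
  assert (Hfail2 : lamf y' < lamf u + rho * s * (G / r)).
  { apply Rnot_ge_lt in Hfail. rewrite Hlw, Hlx in Hfail. fold D in Hfail. rewrite HDG in Hfail. lra. }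
  assert (HNr : 1 <= INR n * r) by nra.
  unfold a0. eapply arm_real with (G := G) (V := V) (r := r) (c := c) (t' := t') (beta := beta) (Cd := Cdes m n A B cB)
    (lamu := lamf u) (lamw := lamf y'); eauto; try lra. Qed.
End Step.

Lemma inK_ext : forall n x y, (forall i, (i < n)%nat -> x i = y i) -> inK n x -> inK n y.
Proof. intros n x y H [H1 [H2 H3]]. split; [|split].
  intros. rewrite <- H; auto. rewrite <- (inner_ext n x x y y); auto.
  rewrite <- (sumR_ext n x y); auto. Qed.

Lemma cv_lam : forall m n A B (xs : nat -> vec) xstar, (forall j, box n (xs j)) -> box n xstar ->
  (forall i, (i < n)%nat -> Un_cv (fun j => xs j i) (xstar i)) -> Txm m n B xstar <> 0 ->
  Un_cv (fun j => lam m n A B (xs j)) (lam m n A B xstar).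
Proof. intros. unfold lam. apply cv_div; auto; rewrite !Txm_Tk; apply cv_Tk; auto. Qed.

Lemma cv_grad : forall m n A B (xs : nat -> vec) xstar i, (forall j, box n (xs j)) -> box n xstar ->
  (forall i, (i < n)%nat -> Un_cv (fun j => xs j i) (xstar i)) -> Txm m n B xstar <> 0 ->
  Un_cv (fun j => grad m n A B (xs j) i) (grad m n A B xstar i).
Proof. intros. unfold grad. apply CV_mult. apply cv_div; auto. apply cv_const. rewrite !Txm_Tk; apply cv_Tk; auto.
  apply CV_minus. rewrite !Txm1_Tk; apply cv_Tk; auto. apply CV_mult. apply cv_lam; auto.
  rewrite !Txm1_Tk; apply cv_Tk; auto. Qed.

Lemma cv_inner_const : forall n (xs : nat -> vec) xstar w, (forall i, (i < n)%nat -> Un_cv (fun j => xs j i) (xstar i)) ->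
  Un_cv (fun j => inner n (xs j) w) (inner n xstar w).
Proof. intros. unfold inner. apply cv_sumR. intros. apply CV_mult; auto. apply cv_const. Qed.

Lemma cv_inner_self : forall n (xs : nat -> vec) xstar, (forall i, (i < n)%nat -> Un_cv (fun j => xs j i) (xstar i)) ->
  Un_cv (fun j => inner n (xs j) (xs j)) (inner n xstar xstar).
Proof. intros. unfold inner. apply cv_sumR. intros. apply CV_mult; auto. Qed.

Lemma beta_S : forall m n A B P rho bmin bmax x beta t k, 0 < bmin <= bmax ->
  SPG1_step m n A B P rho bmin bmax x beta t k -> bmin <= beta (S k) <= bmax.
Proof. intros m n A B P rho bmin bmax x beta t k Hb Hs. destruct Hs as [_ [_ H]]. cbv zeta in H. destruct H as [H1 H2].
  match type of H1 with ?b <= 0 -> _ => destruct (Rle_lt_dec b 0) as [Hle|Hlt] end.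
  rewrite H1; auto; lra.
  rewrite H2 by lra. split. apply Rmax_l. apply Rmax_lub. lra. apply Rmin_l. Qed.

Lemma proj_fix : forall n P y x, is_proj n P -> Omega n x -> (forall i, (i < n)%nat -> y i = x i) ->
  forall i, (i < n)%nat -> P y i = x i.
Proof. intros n P y x HP Hx Hy i Hi. destruct (HP y) as [_ Hmin]. specialize (Hmin x Hx).
  assert (vnorm n (fun i => y i - x i) = 0).
  { unfold vnorm. rewrite (inner_ext n _ _ (fun _ => 0) (fun _ => 0)). unfold inner. rewrite (sumR_ext n _ (fun _ => 0)) by (intros; ring).
    rewrite sumR_zero. apply sqrt_0. intros; rewrite Hy; auto; ring. intros; rewrite Hy; auto; ring. }
  rewrite H in Hmin. assert (vnorm n (fun i => y i - P y i) = 0) by (pose proof (sqrt_pos (inner n (fun i => y i - P y i) (fun i => y i - P y i))); unfold vnorm in *; lra).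
  pose proof (vnorm_zero n _ H0 i Hi). simpl in H1. rewrite <- Hy by auto. lra. Qed.

Lemma part1 : forall (m n : nat) (A B : tensor) (rho bmin bmax : R) (P : vec -> vec)
         (x : nat -> vec) (beta : nat -> R) (t : nat -> nat),
    (2 <= m)%nat -> pos_def m n B -> 0 < bmin <= bmax -> is_proj n P ->
    SPG1_generated m n A B P rho bmin bmax x beta t ->
    forall k,
        (forall j, (j < k)%nat -> ~ vzero n (direction m n A B P (x j) (beta j))) ->
        vzero n (direction m n A B P (x k) (beta k)) ->
        TEiCP m n A B (lam m n A B (x k)) (x k).
Proof. intros m n A B rho bmin bmax P x beta t Hm HBpd Hb HP [Hx0 [Hbeta0 Hst]] k Hprev Hz.
  set (y := fun j => x k j + beta k * grad m n A B (x k) j).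
  assert (Hxk : forall i, (i < n)%nat -> P y i = x k i). { intros i Hi. specialize (Hz i Hi). unfold direction in Hz. fold y in Hz. lra. }
  assert (Hom : Omega n (x k)). { apply (Omega_ext n (P y)); auto. apply HP. }
  assert (Hq : 0 < Txm m n B (x k)) by (apply HBpd, inK_nonzero, Omega_inK; auto).
  apply TEiCP_of; auto. lia.
  assert (Hcase : 0 < beta k \/ forall i, (i < n)%nat -> grad m n A B (x k) i <= 0).
  { destruct k.
    - rewrite Hbeta0. destruct (Req_dec (vnorm n (grad m n A B (x 0%nat))) 0) as [H0|H0].
      right. intros. rewrite (vnorm_zero n _ H0 i H); lra.
      left. pose proof (sqrt_pos (inner n (grad m n A B (x 0%nat)) (grad m n A B (x 0%nat)))). unfold vnorm in H0.
      apply Rdiv_lt_0_compat. lra. destruct H as [H|H]; [auto| exfalso; apply H0; auto].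
    - left. assert (Hs : SPG1_step m n A B P rho bmin bmax x beta t k) by (apply Hst; intros; apply Hprev; lia).
      pose proof (beta_S m n A B P rho bmin bmax x beta t k Hb Hs). lra. }
  destruct Hcase as [Hbpos|Hg]; auto.
  apply (PL n (x k) (grad m n A B (x k)) (beta k)); auto.
  apply grad_Euler; lia || lra.
  intros w Hw Hgw. pose proof (proj_var n P y w HP Hw) as Hv.
  rewrite (inner_ext n y (P y) y (x k)) in Hv by auto.
  unfold y in Hv. rewrite !inner_lin1 in Hv. rewrite (grad_Euler m n A B (x k)) in Hv by (lia || lra).
  destruct Hom as [Hom _]. lra. Qed.

Lemma part2 : forall (m n : nat) (A B : tensor) (rho bmin bmax : R) (P : vec -> vec)
         (x : nat -> vec) (beta : nat -> R) (t : nat -> nat),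
    (2 <= m)%nat ->
    symmetric_tensor m n A -> symmetric_tensor m n B -> pos_def m n B ->
    0 < rho < 1 -> 0 < bmin <= bmax ->
    is_proj n P ->
    SPG1_generated m n A B P rho bmin bmax x beta t ->
    (forall k, ~ vzero n (direction m n A B P (x k) (beta k))) ->
       (forall xstar, accumulation_point n x xstar ->
          constrained_stationary m n A B xstar /\
          TEiCP m n A B (lam m n A B xstar) xstar) /\
       exists L, Un_cv (fun k => lam m n A B (x k)) L /\ pareto_eigenvalue m n A B L.
Proof.
  intros m n A B rho bmin bmax P x beta t Hm HA HB HBpd Hrho Hb HP [Hx0 [Hbeta0 Hsteps]] Hnz.
  assert (Hst : forall k, SPG1_step m n A B P rho bmin bmax x beta t k) by (intros; apply Hsteps; intros; apply Hnz).
  destruct (cB_exists m n B HBpd) as [cB [HcB HcBK]].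
  set (g := grad m n A B). set (lamf := lam m n A B).
  assert (Hb0 : 0 < beta 0%nat).
  { rewrite Hbeta0. destruct (Req_dec (vnorm n (g (x 0%nat))) 0) as [H0|H0].
    - exfalso. apply (Hnz 0%nat). intros i Hi. unfold direction.
      rewrite (proj_fix n P _ (x 0%nat) HP Hx0). ring. intros j Hj. fold g. rewrite (vnorm_zero n _ H0 j Hj). ring. auto.
    - pose proof (sqrt_pos (inner n (g (x 0%nat)) (g (x 0%nat)))). unfold vnorm in H0.
      apply Rdiv_lt_0_compat. lra. destruct H as [H|H]; [auto| exfalso; apply H0; auto]. }
  set (bl := Rmin bmin (beta 0%nat)). set (bu := Rmax bmax (beta 0%nat)).
  assert (Hbl : 0 < bl) by (unfold bl; apply Rmin_glb_lt; lra).
  assert (Hbeta : forall k, bl <= beta k <= bu).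
  { intros [|k]. unfold bl, bu. split. apply Rmin_r. apply Rmax_r.
    pose proof (beta_S m n A B P rho bmin bmax x beta t k Hb (Hst k)). unfold bl, bu.
    split. apply Rle_trans with bmin. apply Rmin_l. lra. apply Rle_trans with bmax. lra. apply Rmax_l. }
  set (z := fun k => P (fun j => x k j + beta k * g (x k) j)).
  assert (Hz : forall k, Omega n (z k)) by (intros; apply HP).
  set (al := fun k => (/2) ^ (t k)).
  assert (Hal : forall k, 0 < al k <= 1).
  { intros. unfold al. split. apply pow_lt; lra. rewrite <- (pow1 (t k)). apply pow_incr; lra. }
  assert (Hpow : forall s, 0 < (/2)^s <= 1).
  { intros. split. apply pow_lt; lra. rewrite <- (pow1 s). apply pow_incr; lra. }
  assert (Hxs : forall k i, (i < n)%nat -> x (S k) i = x k i + al k * (z k i - x k i)).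
  { intros k i Hi. destruct (Hst k) as [_ [H _]]. rewrite H by auto. unfold direction. reflexivity. }
  assert (HK : forall k, inK n (x k)).
  { induction k. apply Omega_inK; auto.
    apply (inK_ext n (fun i => x k i + al k * (z k i - x k i))). intros; rewrite Hxs; auto.
    apply inK_convex; auto. specialize (Hal k); lra. }
  assert (Hn1 : (1 <= n)%nat) by (apply (inK_n n (x 0%nat)); auto).
  set (Dk := fun k => inner n (g (x k)) (direction m n A B P (x k) (beta k))).
  assert (HF1 : forall k, Dk k = inner n (g (x k)) (z k) /\ sqrt (inner n (x k) (x k)) <= inner n (x k) (z k) + beta k * Dk k
      /\ inner n (x k) (z k) <= sqrt (inner n (x k) (x k)) /\ 0 <= Dk k).
  { intros k. destruct (step_F1 m n A B P rho cB Hm HP Hrho HcB HcBK (x k) (beta k) (HK k) ltac:(specialize (Hbeta k); lra)) as [? [? [? [? ?]]]].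
    repeat split; auto. }
  set (a := Rmin 1 (a0 m n A B rho cB bu / 2)).
  assert (Ha0 : 0 < a0 m n A B rho cB bu).
  { unfold a0. apply Rdiv_lt_0_compat. lra.
    assert (0 <= Cdes m n A B cB).
    { unfold Cdes. pose proof (MT_nonneg n m A). pose proof (MT_nonneg n m B). pose proof (pos_INR m).
      apply Rmult_le_pos. repeat apply Rmult_le_pos; try lra; apply pow_le; lra. left; apply Rinv_0_lt_compat, pow_lt; auto. }
    assert (1 <= INR n) by (apply (le_INR 1); auto).
    assert (0 <= 2 * Cdes m n A B cB * INR n ^ 4 * bu).
    { assert (0 < bu) by (unfold bu; pose proof (Rmax_r bmax (beta 0%nat)); lra).
      assert (0 <= INR n ^ 4) by (apply pow_le; lra).
      assert (0 <= 2 * Cdes m n A B cB) by lra.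
      assert (0 <= 2 * Cdes m n A B cB * INR n ^ 4) by (apply Rmult_le_pos; lra).
      apply Rmult_le_pos; lra. }
    nra. }
  assert (Ha : 0 < a) by (unfold a; apply Rmin_glb_lt; lra).
  assert (Hala : forall k, a <= al k).
  { intros k. unfold al. destruct (t k) as [|t'] eqn:Et.
    - simpl. unfold a. apply Rmin_l.
    - destruct (Hst k) as [[_ Hfail] _]. specialize (Hfail t' ltac:(lia)).
      assert (HT := step_arm m n A B P rho cB Hm HA HB HP Hrho HcB HcBK (x k) (beta k) bu ((/2)^t') (HK k)
        ltac:(specialize (Hbeta k); specialize (Hb0); lra) (Hpow t') Hfail).
      simpl. unfold a. apply Rle_trans with (a0 m n A B rho cB bu / 2). apply Rmin_r. lra. }
  assert (Hinc : forall k, lamf (x k) + rho * a * Dk k <= lamf (x (S k))).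
  { intros k. destruct (Hst k) as [[Harm _] [Hx' _]]. unfold armijo_ok in Harm. destruct (HF1 k) as [_ [_ [_ HD]]].
    pose proof (Hala k) as Hak. unfold Dk, g in HD. unfold al in Hak. unfold lamf, Dk, g.
    rewrite (lam_ext m n A B (x (S k)) (fun i => x k i + (/2)^(t k) * direction m n A B P (x k) (beta k) i)) by auto.
    set (DD := inner n (grad m n A B (x k)) (direction m n A B P (x k) (beta k))) in *.
    assert (rho * a * DD <= rho * (/2)^(t k) * DD). { apply Rmult_le_compat_r; auto. apply Rmult_le_compat_l; [lra|auto]. }
    lra. }
  set (Lam := MT n m A / cB).
  assert (HLam : forall k, lamf (x k) <= Lam) by (intros; apply lam_bound; auto; apply inK_box; auto).
  assert (Hsum : forall N, lamf (x 0%nat) + rho * a * sumR N Dk <= lamf (x N)).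
  { induction N. simpl. lra. simpl. pose proof (Hinc N). lra. }
  set (S0 := (Lam - lamf (x 0%nat)) / (rho * a)).
  assert (HS0 : forall N, sumR N Dk <= S0).
  { intros. unfold S0. apply Rmult_le_reg_l with (rho * a). nra. 
    replace (rho * a * ((Lam - lamf (x 0%nat)) / (rho * a))) with (Lam - lamf (x 0%nat)) by (field; lra).
    pose proof (Hsum N). pose proof (HLam N). lra. }
  assert (HD0 : Un_cv Dk 0) by (apply (summable_cv0 Dk S0); auto; intros; apply HF1).
  set (X := fun k => inner n (x k) (x k)). set (r := fun k => sqrt (X k)).
  assert (HXr : forall k, 0 < r k <= 1 /\ r k * r k = X k /\ 1 <= INR n * r k).
  { intros k. pose proof (inK_r2 n (x k) (HK k)). destruct (HK k) as [_ [HX1 _]]. fold (X k) in H, HX1.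
    assert (0 < X k). { destruct (Rle_lt_dec (X k) 0); auto. pose proof (pos_INR n). nra. }
    assert (r k * r k = X k) by (apply sqrt_sqrt; lra). assert (0 < r k) by (apply sqrt_lt_R0; auto).
    split. split; auto. nra. split; auto. nra. }
  assert (Hnorm : forall k, X k + 2 * a * (r k * (1 - r k)) - 2 * bu * Dk k <= X (S k)).
  { intros k. destruct (HXr k) as [Hr [Hrr _]]. destruct (HF1 k) as [_ [H1 [H2 H3]]].
    assert (E : X (S k) = (1 - al k) * ((1 - al k) * X k + al k * inner n (x k) (z k)) + al k * ((1 - al k) * inner n (x k) (z k) + al k * 1)).
    { unfold X. rewrite (inner_ext n (x (S k)) (x (S k)) (fun i => (1 - al k) * x k i + al k * z k i) (fun i => (1 - al k) * x k i + al k * z k i)) by (intros; rewrite Hxs; auto; ring).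
      rewrite inner_comb. rewrite (inner_comm n (x k)), (inner_comm n (z k)). rewrite !inner_comb.
      destruct (Hz k) as [Hzz _]. rewrite Hzz, (inner_comm n (z k) (x k)). ring. }
    rewrite E. fold (X k) (r k) in H1, H2.
    apply (norm_real (X k) (inner n (x k) (z k)) (r k) a (al k) (beta k) bu (Dk k)).
    - lra.
    - lra.
    - split; auto.
    - apply Hal.
    - lra.
    - lra.
    - lra.
    - pose proof (Hbeta k). lra. }
  set (W := fun k => r k * (1 - r k)).
  assert (HW0 : forall k, 0 <= W k) by (intros; unfold W; destruct (HXr k) as [? _]; nra).
  assert (HWs : forall N, X 0%nat + 2 * a * sumR N W - 2 * bu * sumR N Dk <= X N).
  { induction N. simpl. lra. simpl. pose proof (Hnorm N). unfold W in *. lra. }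
  assert (HW : Un_cv W 0).
  { apply (summable_cv0 W ((1 + 2 * bu * S0) / (2 * a))); auto. intros N.
    apply Rmult_le_reg_l with (2 * a). lra. replace (2 * a * ((1 + 2 * bu * S0) / (2 * a))) with (1 + 2 * bu * S0) by (field; lra).
    pose proof (HWs N). pose proof (HS0 N). destruct (HK N) as [_ [HX1 _]]. fold (X N) in HX1.
    assert (0 <= X 0%nat) by apply inner_nonneg. assert (0 < bu) by (pose proof (Hbeta 0%nat); lra). nra. }
  assert (HX1 : Un_cv X 1).
  { apply (cv_dominated W X 1 (2 * INR n)); auto. intros k. destruct (HXr k) as [[Hr0 Hr1] [Hrr HNr]].
    rewrite Rabs_minus_sym. rewrite Rabs_pos_eq by nra. unfold W.
    assert (1 - r k <= INR n * (r k * (1 - r k))) by nra. nra. }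
  assert (Hacc : forall xstar, accumulation_point n x xstar ->
      Omega n xstar /\ forall i, (i < n)%nat -> g xstar i <= 0).
  { intros xstar [phi [Hphi Hcv]].
    assert (HKs : inK n xstar) by (apply (inK_closed n (fun j => x (phi j))); auto).
    assert (Hbox : forall j, box n (x (phi j))) by (intros; apply inK_box; auto).
    assert (Hboxs : box n xstar) by (apply inK_box; auto).
    assert (Hom : Omega n xstar).
    { split; [|apply HKs]. apply (UL_sequence (fun j => X (phi j))).
      apply cv_inner_self; auto. apply cv_subseq; auto. }
    assert (Hqs : Txm m n B xstar <> 0) by (pose proof (HcBK xstar HKs); lra).
    split; auto.
    apply (PL n xstar (g xstar) bl); auto.
    apply grad_Euler; auto. lia.
    intros w Hw Hgw.
    set (Q := fun k => (X k + 1) / 2 + bu * Dk k - inner n (x k) w + bu * Rabs (inner n (g (x k)) w - inner n (g xstar) w)).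
    assert (HQ : forall k, bl * inner n (g xstar) w <= Q k).
    { intros k. pose proof (proj_var n P (fun j => x k j + beta k * g (x k) j) w HP Hw) as Hv. fold (z k) in Hv.
      rewrite !inner_lin1 in Hv. destruct (HF1 k) as [HDz [_ [_ HD0']]]. rewrite <- HDz in Hv.
      pose proof (inner_cross n (x k) (z k)). destruct (Hz k) as [Hzz _]. rewrite Hzz in H. fold (X k) in H.
      pose proof (Hbeta k).
      assert (beta k * Dk k <= bu * Dk k) by (apply Rmult_le_compat_r; lra).
      set (e := inner n (g (x k)) w - inner n (g xstar) w).
      assert (beta k * inner n (g (x k)) w = beta k * inner n (g xstar) w + beta k * e) by (unfold e; ring).
      assert (bl * inner n (g xstar) w <= beta k * inner n (g xstar) w) by (apply Rmult_le_compat_r; lra).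
      assert (- (bu * Rabs e) <= beta k * e).
      { pose proof (Rabs_pos e). assert (beta k * Rabs e <= bu * Rabs e) by (apply Rmult_le_compat_r; lra).
        assert (- e <= Rabs e) by (rewrite <- Rabs_Ropp; apply Rle_abs).
        assert (beta k * (- e) <= beta k * Rabs e) by (apply Rmult_le_compat_l; lra). lra. }
      unfold Q. fold e. lra. }
    assert (HQcv : Un_cv (fun j => Q (phi j)) ((1 + 1) / 2 + bu * 0 - inner n xstar w + bu * 0)).
    { unfold Q. apply CV_plus. apply CV_minus. apply CV_plus.
      - unfold Rdiv. apply CV_mult. apply CV_plus. apply (cv_subseq X); auto. apply cv_const. apply cv_const.
      - apply CV_mult. apply cv_const. apply (cv_subseq Dk); auto.
      - apply cv_inner_const; auto.
      - apply CV_mult. apply cv_const. replace 0 with (Rabs (inner n (g xstar) w - inner n (g xstar) w)) by (rewrite Rminus_diag_eq, Rabs_R0; auto).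
        apply (continuity_seq Rabs). apply Rcontinuity_abs. apply CV_minus; [|apply cv_const].
        unfold inner. apply cv_sumR. intros i Hi. apply CV_mult; [|apply cv_const]. apply cv_grad; auto. }
    assert (bl * inner n (g xstar) w <= (1 + 1) / 2 + bu * 0 - inner n xstar w + bu * 0)
      by (apply (cv_le_const _ _ _ HQcv); intros; apply HQ).
    lra. }
  split.
  - intros xstar Hac. destruct (Hacc xstar Hac) as [Hom Hg]. split.
    apply KKT_of; auto; lia. apply TEiCP_of; auto; lia.
  - assert (Hgrow : Un_growing (fun k => lamf (x k))).
    { intros k. pose proof (Hinc k). destruct (HF1 k) as [_ [_ [_ HD]]]. assert (0 <= rho * a * Dk k) by (apply Rmult_le_pos; nra). lra. }
    assert (Hub : has_ub (fun k => lamf (x k))). { exists Lam. intros y [k Hk]. subst. auto. }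
    destruct (growing_cv _ Hgrow Hub) as [L HL].
    destruct (BWn n x) with (k := n) as [phi [xstar [Hphi Hcv]]]; auto.
    { intros j i Hi. destruct (HK j) as [H0 _]. pose proof (inK_box n _ (HK j) i Hi). pose proof (H0 i Hi).
      rewrite Rabs_pos_eq in H by auto. lra. }
    assert (Hac : accumulation_point n x xstar) by (exists phi; auto).
    destruct (Hacc xstar Hac) as [Hom Hg].
    assert (Hqs : Txm m n B xstar <> 0) by (pose proof (HcBK xstar (Omega_inK n xstar Hom)); lra).
    assert (HL1 : Un_cv (fun j => lamf (x (phi j))) (lamf xstar)).
    { apply cv_lam; auto. intros; apply inK_box; auto. apply inK_box, Omega_inK; auto. }
    assert (HL2 : Un_cv (fun j => lamf (x (phi j))) L) by (apply (cv_subseq (fun k => lamf (x k))); auto).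
    pose proof (UL_sequence _ _ _ HL1 HL2) as HLe.
    exists L. split; auto. exists xstar. rewrite <- HLe. apply TEiCP_of; auto; lia.
Qed.


Import Defs.

Theorem theorem1 :
  forall (m n : nat) (A B : tensor) (rho bmin bmax : R) (P : vec -> vec)
         (x : nat -> vec) (beta : nat -> R) (t : nat -> nat),
    (2 <= m)%nat ->
    symmetric_tensor m n A -> symmetric_tensor m n B -> pos_def m n B ->
    0 < rho < 1 -> 0 < bmin <= bmax ->
    is_proj n P ->
    SPG1_generated m n A B P rho bmin bmax x beta t ->
    (forall k,
        (forall j, (j < k)%nat -> ~ vzero n (direction m n A B P (x j) (beta j))) ->
        vzero n (direction m n A B P (x k) (beta k)) ->
        TEiCP m n A B (lam m n A B (x k)) (x k)) /\
    ((forall k, ~ vzero n (direction m n A B P (x k) (beta k))) ->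
       (forall xstar, accumulation_point n x xstar ->
          constrained_stationary m n A B xstar /\
          TEiCP m n A B (lam m n A B xstar) xstar) /\
       exists L, Un_cv (fun k => lam m n A B (x k)) L /\ pareto_eigenvalue m n A B L).
Proof.
  intros m n A B rho bmin bmax P x beta t Hm HA HB HBpd Hrho Hb HP Hgen.
  split.
  - intros k Hprev Hz. apply (part1 m n A B rho bmin bmax P x beta t); auto.
  - intros Hnz. apply (part2 m n A B rho bmin bmax P x beta t); auto.
Qed.
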